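(* The group $\mathrm{SL}(2,\mathbb{Z})\ltimes\mathbb{Z}^2$ (for the standard linear action of $\mathrm{SL}(2,\mathbb{Z})$ on $\mathbb{Z}^2$) embeds as a subgroup of the group of orientation-preserving homeomorphisms of the circle. Moreover, if $\mathbb{F}_2$ is a free subgroup of finite index in $\mathrm{SL}(2,\mathbb{Z})$, then $\mathbb{F}_2\ltimes\mathbb{Z}^2$ embeds as a subgroup of the group of orientation-preserving homeomorphisms of the interval $[0,1]$. *)

(* Defs.v *)
From Stdlib Require Import Reals ZArith List.
Open Scope R_scope.

Record M2 : Type := mkM2 { m11 : Z; m12 : Z; m21 : Z; m22 : Z }.

Definition M2mul (A B : M2) : M2 :=
  mkM2 (m11 A * m11 B + m12 A * m21 B)%Z (m11 A * m12 B + m12 A * m22 B)%Z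
       (m21 A * m11 B + m22 A * m21 B)%Z (m21 A * m12 B + m22 A * m22 B)%Z.

Definition M2one : M2 := mkM2 1 0 0 1.

Definition M2det (A : M2) : Z := (m11 A * m22 A - m12 A * m21 A)%Z.

(* inverse of a determinant-1 matrix *)
Definition M2inv (A : M2) : M2 := mkM2 (m22 A) (- m12 A)%Z (- m21 A)%Z (m11 A).

Definition inSL2Z (A : M2) : Prop := M2det A = 1%Z.

Definition actV (A : M2) (v : Z * Z) : Z * Z :=
  ((m11 A * fst v + m12 A * snd v)%Z, (m21 A * fst v + m22 A * snd v)%Z).

Definition Vadd (v w : Z * Z) : Z * Z := ((fst v + fst w)%Z, (snd v + snd w)%Z).

Definition sdmul (g h : M2 * (Z * Z)) : M2 * (Z * Z) :=
  (M2mul (fst g) (fst h), Vadd (snd g) (actV (fst g) (snd h))).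

Definition is_subgroup (H : M2 -> Prop) : Prop :=
  (forall A, H A -> inSL2Z A) /\ H M2one /\
  (forall A B, H A -> H B -> H (M2mul A B)) /\
  (forall A, H A -> H (M2inv A)).

Definition finite_index (H : M2 -> Prop) : Prop :=
  exists reps : list M2, forall A, inSL2Z A ->
    exists r B, In r reps /\ H B /\ A = M2mul r B.

(* words in two letters and their inverses: (letter, is_inverse),
   letter false = a, letter true = b *)
Definition letter := (bool * bool)%type.

Definition eval_letter (a b : M2) (l : letter) : M2 :=
  let x := if fst l then b else a in if snd l then M2inv x else x.

Fixpoint eval_word (a b : M2) (w : list letter) : M2 :=
  match w with
  | nil => M2one
  | l :: w' => M2mul (eval_letter a b l) (eval_word a b w')
  end.

Fixpoint reduced (w : list letter) : Prop :=
  match w with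
  | l1 :: ((l2 :: _) as w') =>
      ~ (fst l1 = fst l2 /\ snd l1 <> snd l2) /\ reduced w'
  | _ => True
  end.

Definition free_rank2_on (H : M2 -> Prop) (a b : M2) : Prop :=
  H a /\ H b /\
  (forall A, H A -> exists w, A = eval_word a b w) /\
  (forall w, w <> nil -> reduced w -> eval_word a b w <> M2one).

Definition free_rank2 (H : M2 -> Prop) : Prop := exists a b, free_rank2_on H a b.

(* An element of Homeo+(S^1), S^1 = R/Z, is represented by a lift f : R -> R:
   continuous, strictly increasing, f (x + 1) = f x + 1; two lifts represent the
   same circle homeomorphism iff they differ by an integer translation. *)
Definition circle_lift (f : R -> R) : Prop :=
  continuity f /\ (forall x y, x < y -> f x < f y) /\ (forall x, f (x + 1) = f x + 1).

Definition same_circle_map (f g : R -> R) : Prop :=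
  exists k : Z, forall x, f x = g x + IZR k.

Definition inI (x : R) : Prop := 0 <= x <= 1.

Definition interval_homeo (f : R -> R) : Prop :=
  (forall x, inI x -> inI (f x)) /\
  (forall y, inI y -> exists x, inI x /\ f x = y) /\
  (forall x y, inI x -> inI y -> x < y -> f x < f y) /\
  (forall x, inI x -> forall eps, eps > 0 -> exists delta, delta > 0 /\
      forall y, inI y -> Rabs (y - x) < delta -> Rabs (f y - f x) < eps).

(* Main.v *)
Require Import Defs.
From Stdlib Require Import Reals ZArith List Lia Lra Psatz Bool ClassicalEpsilon ProofIrrelevance.
From Stdlib Require Cantor.
From Coquelicot Require Import Coquelicot.
Import ListNotations.

Open Scope R_scope.

Record OS := mkOS {
  Yt : Type; ylt : Yt -> Yt -> Prop; ycode : Yt -> nat;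
  ycode_inj : forall x y, ycode x = ycode y -> x = y;
  ylt_irr : forall x, ~ ylt x x;
  ylt_trans : forall x y z, ylt x y -> ylt y z -> ylt x z;
  ylt_tot : forall x y, ylt x y \/ x = y \/ ylt y x;
  ypt : Yt }.

Definition dec (S:OS) (n:nat) : option (Yt S) :=
  match excluded_middle_informative (exists y, ycode S y = n) with
  | left H => Some (proj1_sig (constructive_indefinite_description _ H))
  | right _ => None end.

Lemma dec_code S y : dec S (ycode S y) = Some y.
Proof.
  unfold dec. destruct excluded_middle_informative as [H|H].
  - f_equal. destruct constructive_indefinite_description as [z Hz]. simpl.
    apply ycode_inj; auto.
  - exfalso; apply H; eauto.
Qed.

Lemma dec_some S n y : dec S n = Some y -> ycode S y = n.
Proof.
  unfold dec. destruct excluded_middle_informative as [H|H]; [|discriminate].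
  destruct constructive_indefinite_description as [z Hz]. simpl. intro E; inversion E; subst; auto.
Qed.

Definition gw (n:nat) : R := (/2)^(S n).

Lemma gw_pos n : 0 < gw n.
Proof. unfold gw. apply pow_lt. lra. Qed.

Definition term S (f : Yt S -> R) (n:nat) : R :=
  match dec S n with Some y => gw n * f y | None => 0 end.

Definition SY S (f : Yt S -> R) : R := Series (term S f).

Definition bnd S (f : Yt S -> R) := exists B, forall y, Rabs (f y) <= B.

Lemma is_series_gw : is_series gw 1.
Proof.
  unfold gw. apply is_series_ext with (a := fun n => (/2)^n * /2).
  { intro n. simpl. ring. }
  replace 1 with ((/ (1 - /2)) * /2) by field.
  apply (is_series_scal_r (/2)). apply is_series_geom. rewrite Rabs_pos_eq; lra.
Qed.

Lemma ex_gw : ex_series gw.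
Proof. exists 1. apply is_series_gw. Qed.

Lemma ex_term S f : bnd S f -> ex_series (term S f).
Proof.
  intros [B HB]. apply (@ex_series_le R_AbsRing R_CompleteNormedModule) with (b := fun n => B * gw n).
  - intro n. change (norm (term S f n)) with (Rabs (term S f n)).
    unfold term. destruct (dec S n) as [y|].
    + rewrite Rabs_mult. rewrite (Rabs_pos_eq (gw n)) by (left; apply gw_pos).
      rewrite Rmult_comm. apply Rmult_le_compat_r. left; apply gw_pos. apply HB.
    + rewrite Rabs_R0. specialize (HB (ypt S)). pose proof (Rabs_pos (f (ypt S))).
      pose proof (gw_pos n). nra.
  - apply (ex_series_ext (fun n => gw n * B)). intro; simpl; ring.
    apply (ex_series_scal_r B). apply ex_gw.
Qed.

Lemma bnd_plus S f g : bnd S f -> bnd S g -> bnd S (fun y => f y + g y).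
Proof. intros [A HA] [B HB]. exists (A+B). intro y. eapply Rle_trans. apply Rabs_triang. specialize (HA y); specialize (HB y); lra. Qed.
Lemma bnd_scal S c f : bnd S f -> bnd S (fun y => c * f y).
Proof. intros [A HA]. exists (Rabs c * A). intro y. rewrite Rabs_mult. apply Rmult_le_compat_l. apply Rabs_pos. auto. Qed.
Lemma bnd_const S c : bnd S (fun _ => c).
Proof. exists (Rabs c). intro; lra. Qed.
Lemma bnd_opp S f : bnd S f -> bnd S (fun y => - f y).
Proof. intros [A HA]. exists A. intro y. rewrite Rabs_Ropp. auto. Qed.

Lemma SY_plus S f g : bnd S f -> bnd S g -> SY S (fun y => f y + g y) = SY S f + SY S g.
Proof.
  intros Hf Hg. unfold SY. rewrite <- Series_plus by (apply ex_term; auto).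
  apply Series_ext. intro n. unfold term. destruct (dec S n); ring.
Qed.

Lemma SY_scal S c f : SY S (fun y => c * f y) = c * SY S f.
Proof.
  unfold SY. rewrite <- Series_scal_l. apply Series_ext. intro n. unfold term. destruct (dec S n); ring.
Qed.

Lemma SY_ext S f g : (forall y, f y = g y) -> SY S f = SY S g.
Proof. intro H. unfold SY. apply Series_ext. intro n. unfold term. destruct (dec S n); auto. rewrite H; auto. Qed.

Lemma SY_zero S : SY S (fun _ => 0) = 0.
Proof. rewrite (SY_ext S (fun _ => 0) (fun y => 0 * 0)) by (intro; ring). rewrite SY_scal. ring. Qed.

Lemma SY_opp S f : SY S (fun y => - f y) = - SY S f.
Proof. rewrite (SY_ext S _ (fun y => (-1) * f y)) by (intro; ring). rewrite SY_scal. ring. Qed.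

Lemma SY_minus S f g : bnd S f -> bnd S g -> SY S (fun y => f y - g y) = SY S f - SY S g.
Proof.
  intros. unfold Rminus. rewrite SY_plus; auto. rewrite SY_opp. auto. apply bnd_opp; auto.
Qed.

Lemma SY_nonneg S f : bnd S f -> (forall y, 0 <= f y) -> 0 <= SY S f.
Proof.
  intros Hb H. unfold SY. rewrite <- (Rmult_0_l (Series (term S f))).
  rewrite <- Series_scal_l.
  apply Series_le.
  - intro n. unfold term. pose proof (gw_pos n). destruct (dec S n); [specialize (H y)|]; split; nra.
  - apply ex_term; auto.
Qed.

Lemma SY_le S f g : bnd S f -> bnd S g -> (forall y, f y <= g y) -> SY S f <= SY S g.
Proof.
  intros Hf Hg H. cut (0 <= SY S (fun y => g y - f y)).
  { rewrite SY_minus; auto. lra. }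
  apply SY_nonneg. apply bnd_plus; auto. apply bnd_opp; auto. intro y. specialize (H y). lra.
Qed.

Lemma Series_ge_term a n : ex_series a -> (forall k, 0 <= a k) -> a n <= Series a.
Proof.
  intros He Hp. rewrite (Series_incr_n a (S n)) by (lia || auto).
  simpl pred. assert (a n <= sum_f_R0 a n).
  { destruct n. simpl. lra. simpl. cut (0 <= sum_f_R0 a n). lra.
    apply cond_pos_sum. auto. }
  assert (0 <= Series (fun k => a (S n + k)%nat)).
  { rewrite <- (Rmult_0_l (Series (fun k => a (S n + k)%nat))). rewrite <- Series_scal_l.
    apply Series_le.
    - intro k. rewrite Rmult_0_l. split; [lra|apply Hp].
    - apply (ex_series_incr_n a (S n)). auto. }
  lra.
Qed.

Lemma SY_ge_point S f y : bnd S f -> (forall z, 0 <= f z) -> gw (ycode S y) * f y <= SY S f.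
Proof.
  intros Hb Hp. unfold SY. replace (gw (ycode S y) * f y) with (term S f (ycode S y)).
  apply Series_ge_term. apply ex_term; auto.
  intro k. unfold term. destruct (dec S k). pose proof (gw_pos k). specialize (Hp y0). nra. lra.
  unfold term. rewrite dec_code. auto.
Qed.

Lemma SY_pos S f y : bnd S f -> (forall z, 0 <= f z) -> 0 < f y -> 0 < SY S f.
Proof.
  intros Hb Hp Hy. eapply Rlt_le_trans; [|apply (SY_ge_point S f y); auto].
  pose proof (gw_pos (ycode S y)). nra.
Qed.

Lemma SY_le_bound S f t : bnd S f ->
  (forall N, sum_f_R0 (term S f) N <= t) -> SY S f <= t.
Proof.
  intros Hb H. unfold SY. pose proof (Series_correct _ (ex_term S f Hb)) as Hc.
  apply is_series_Reals in Hc. unfold infinite_sum in Hc.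
  assert (Un_cv (fun _ : nat => t) t).
  { intros e He. exists 0%nat. intros. unfold Rdist. rewrite Rminus_eq_0, Rabs_R0. lra. }
  apply (Rle_cv_lim H Hc H0).
Qed.

Definition ind {T} (P : T -> Prop) (y : T) : R := if excluded_middle_informative (P y) then 1 else 0.

Lemma bnd_ind S (P : Yt S -> Prop) : bnd S (ind P).
Proof. exists 1. intro y. unfold ind. destruct excluded_middle_informative; rewrite ?Rabs_R1, ?Rabs_R0; lra. Qed.

Lemma ind_range {T} (P : T -> Prop) y : 0 <= ind P y <= 1.
Proof. unfold ind. destruct excluded_middle_informative; lra. Qed.

Lemma ind_true {T} (P : T -> Prop) y : P y -> ind P y = 1.
Proof. unfold ind. destruct excluded_middle_informative; tauto. Qed.
Lemma ind_false {T} (P : T -> Prop) y : ~ P y -> ind P y = 0.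
Proof. unfold ind. destruct excluded_middle_informative; tauto. Qed.

Definition mes S (P : Yt S -> Prop) := SY S (ind P).
Definition MM S := SY S (fun _ => 1).

Lemma mes_nonneg S P : 0 <= mes S P.
Proof. apply SY_nonneg. apply bnd_ind. intro; apply ind_range. Qed.

Lemma mes_mono S (P Q : Yt S -> Prop) : (forall y, P y -> Q y) -> mes S P <= mes S Q.
Proof.
  intro H. apply SY_le; try apply bnd_ind. intro y. unfold ind.
  destruct (excluded_middle_informative (P y)), (excluded_middle_informative (Q y)); try lra.
  exfalso; auto.
Qed.

Lemma mes_split S (P Q : Yt S -> Prop) : mes S P = mes S (fun y => P y /\ Q y) + mes S (fun y => P y /\ ~ Q y).
Proof.
  unfold mes. rewrite <- SY_plus by apply bnd_ind. apply SY_ext. intro y. unfold ind.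
  destruct (excluded_middle_informative (P y)), (excluded_middle_informative (Q y)),
   (excluded_middle_informative (P y /\ Q y)), (excluded_middle_informative (P y /\ ~ Q y)); try lra; tauto.
Qed.

Lemma mes_sub S (A B C : Yt S -> Prop) : (forall y, A y -> B y \/ C y) -> mes S A <= mes S B + mes S C.
Proof.
  intro H. unfold mes. rewrite <- SY_plus by apply bnd_ind. apply SY_le. apply bnd_ind.
  apply bnd_plus; apply bnd_ind. intro y. unfold ind.
  destruct (excluded_middle_informative (A y)), (excluded_middle_informative (B y)),
   (excluded_middle_informative (C y)); try lra. destruct (H y a); tauto.
Qed.

Lemma mes_ext S (P Q : Yt S -> Prop) : (forall y, P y <-> Q y) -> mes S P = mes S Q.
Proof.
  intro H. unfold mes. apply SY_ext. intro y. unfold ind.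
  destruct (excluded_middle_informative (P y)), (excluded_middle_informative (Q y)); firstorder.
Qed.

Lemma mes_full S : mes S (fun _ => True) = MM S.
Proof. apply SY_ext. intro. apply ind_true. auto. Qed.

Lemma sum_single (n0 : nat) c m : sum_f_R0 (fun n => if Nat.eq_dec n n0 then c else 0) m = if le_lt_dec n0 m then c else 0.
Proof.
  induction m as [|m IH].
  - cbn [sum_f_R0]. destruct (Nat.eq_dec 0 n0), (le_lt_dec n0 0); try lia; auto.
  - cbn [sum_f_R0]. rewrite IH. destruct (Nat.eq_dec (S m) n0), (le_lt_dec n0 m), (le_lt_dec n0 (S m)); try lia; lra.
Qed.

Lemma Series_single n0 c : Series (fun n => if Nat.eq_dec n n0 then c else 0) = c.
Proof.
  assert (Hex : ex_series (fun n => if Nat.eq_dec n n0 then c else 0)).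
  { apply (ex_series_incr_n _ (S n0)). apply (ex_series_ext (fun n => gw n * 0)).
    intro k. destruct (Nat.eq_dec (S n0 + k) n0); try lia. simpl; ring. apply ex_series_scal_r. apply ex_gw. }
  rewrite (Series_incr_n _ (S n0)) by (auto || lia).
  rewrite (Series_ext _ (fun _ => 0 * 0)).
  - rewrite Series_scal_l. simpl pred. rewrite sum_single. destruct le_lt_dec; try lia. ring.
  - intro k. destruct (Nat.eq_dec (S n0 + k) n0); try lia. ring.
Qed.

Definition ww S (y : Yt S) := gw (ycode S y).

Lemma mes_single S y : mes S (fun z => z = y) = ww S y.
Proof.
  unfold mes, SY, ww. rewrite <- (Series_single (ycode S y) (gw (ycode S y))).
  apply Series_ext. intro n. unfold term. destruct (dec S n) eqn:E.
  - apply dec_some in E. subst n. destruct Nat.eq_dec.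
    + apply ycode_inj in e. subst. rewrite ind_true; auto. ring.
    + rewrite ind_false. ring. intro; subst; auto.
  - destruct Nat.eq_dec; auto. subst. rewrite dec_code in E. discriminate.
Qed.

Lemma ww_pos S y : 0 < ww S y.
Proof. apply gw_pos. Qed.

Lemma SY_const S c : SY S (fun _ => c) = c * MM S.
Proof. rewrite (SY_ext S _ (fun _ => c * 1)) by (intro; ring). apply SY_scal. Qed.

Lemma MM_pos S : 0 < MM S.
Proof. apply (SY_pos S _ (ypt S)). apply bnd_const. intro; lra. lra. Qed.

Lemma ww_le_M S y : ww S y <= MM S.
Proof. rewrite <- mes_single, <- mes_full. apply mes_mono. auto. Qed.

Lemma tail_bound S N : mes S (fun y => (N <= ycode S y)%nat) <= (/2)^N.
Proof.
  unfold mes, SY.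
  assert (Hg : Series (fun n => if le_lt_dec N n then gw n else 0) = (/2)^N).
  { rewrite (Series_incr_n_aux _ N).
    - rewrite (Series_ext _ (fun k => (/2)^N * gw k)).
      + rewrite Series_scal_l. rewrite (is_series_unique _ _ is_series_gw). ring.
      + intro k. destruct le_lt_dec; try lia. unfold gw. rewrite <- pow_add. f_equal. lia.
    - intros k Hk. destruct le_lt_dec; auto; lia. }
  rewrite <- Hg. apply Series_le.
  - intro n. unfold term. destruct (dec S n) eqn:E.
    + apply dec_some in E. pose proof (gw_pos n). pose proof (ind_range (fun y => (N <= ycode S y)%nat) y).
      destruct le_lt_dec.
      * split; nra.
      * rewrite ind_false by lia. split; lra.
    + destruct le_lt_dec; pose proof (gw_pos n); split; lra.
  - apply (@ex_series_le R_AbsRing R_CompleteNormedModule) with (b := gw). intro n. change (norm (if le_lt_dec N n then gw n else 0)) with (Rabs (if le_lt_dec N n then gw n else 0)).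
    destruct le_lt_dec; pose proof (gw_pos n); rewrite ?Rabs_R0, ?Rabs_pos_eq; lra.
    apply ex_gw.
Qed.

Lemma pow_half_small e : 0 < e -> exists N, (/2)^N < e.
Proof.
  intro He. destruct (pow_lt_1_zero (/2)) with (y := e) as [N HN]; auto.
  rewrite Rabs_pos_eq; lra. exists N. specialize (HN N (le_n N)). rewrite Rabs_pos_eq in HN; auto.
  left; apply pow_lt; lra.
Qed.

Open Scope R_scope.


Definition aa S y := mes S (fun z => ylt S z y).
Definition gtm S y := mes S (fun z => ylt S y z).

Lemma mes_disj S (P Q : Yt S -> Prop) : (forall y, ~ (P y /\ Q y)) ->
  mes S (fun y => P y \/ Q y) = mes S P + mes S Q.
Proof.
  intro H. rewrite (mes_split S _ P). f_equal; apply mes_ext; intro y; specialize (H y); tauto.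
Qed.

Lemma partition S y : MM S = aa S y + ww S y + gtm S y.
Proof.
  rewrite <- mes_full. unfold aa, gtm. rewrite <- mes_single.
  rewrite <- mes_disj. rewrite <- mes_disj. apply mes_ext. intro z.
  destruct (ylt_tot S z y) as [H|[H|H]]; tauto.
  - intros z [[H|H] H']; subst; eapply ylt_irr; eauto using ylt_trans.
  - intros z [H H']; subst; eapply ylt_irr; eauto.
Qed.

Lemma aa_nonneg S y : 0 <= aa S y.
Proof. apply mes_nonneg. Qed.
Lemma gtm_nonneg S y : 0 <= gtm S y.
Proof. apply mes_nonneg. Qed.

Lemma aa_lt S y z : ylt S y z -> aa S y + ww S y <= aa S z.
Proof.
  intro H. unfold aa. rewrite <- mes_single. rewrite <- mes_disj.
  apply mes_mono. intros u [Hu|Hu]; subst; eauto using ylt_trans.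
  intros u [Hu Hu']; subst; eapply ylt_irr; eauto.
Qed.

Definition fl (r : R) : Z := Int_part r.
Lemma fl_spec r : IZR (fl r) <= r < IZR (fl r) + 1.
Proof. unfold fl. pose proof (base_Int_part r). lra. Qed.
Lemma fl_unique r k : IZR k <= r < IZR k + 1 -> fl r = k.
Proof. intro H. unfold fl. symmetry. apply Int_part_spec. lra. Qed.

Definition count S (y : Yt S) (t : R) : R :=
  IZR (fl ((t - aa S y) / MM S)) + Rmin 1 ((t - aa S y - IZR (fl ((t - aa S y) / MM S)) * MM S) / ww S y).

Lemma count_eq S y t j r : t - aa S y = IZR j * MM S + r -> 0 <= r < MM S ->
  count S y t = IZR j + Rmin 1 (r / ww S y).
Proof.
  intros E Hr. pose proof (MM_pos S) as HM.
  assert (fl ((t - aa S y) / MM S) = j).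
  { apply fl_unique. rewrite E. split.
    - apply (Rmult_le_reg_r (MM S)); auto. field_simplify; lra.
    - apply (Rmult_lt_reg_r (MM S)); auto. field_simplify; lra. }
  unfold count. rewrite H. f_equal. f_equal. f_equal. lra.
Qed.

Lemma count_gen S y t : exists j r, t - aa S y = IZR j * MM S + r /\ 0 <= r < MM S.
Proof.
  pose proof (MM_pos S). pose proof (fl_spec ((t - aa S y) / MM S)) as [H1 H2].
  exists (fl ((t - aa S y) / MM S)), (t - aa S y - IZR (fl ((t - aa S y) / MM S)) * MM S).
  split. ring. split.
  - apply (Rmult_le_compat_r (MM S)) in H1; [|lra]. field_simplify in H1; lra.
  - apply (Rmult_lt_compat_r (MM S)) in H2; [|lra]. field_simplify in H2; lra.
Qed.

Definition config S (c : Yt S -> R) := forall y z, ylt S y z ->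
  exists n : Z, IZR n <= c z /\ c z <= c y /\ c y <= IZR n + 1 /\ (c y = IZR n + 1 \/ c z = IZR n).

Lemma config_bnd S c : config S c -> bnd S c.
Proof.
  intro H. exists (Rabs (c (ypt S)) + 1). intro y.
  destruct (ylt_tot S y (ypt S)) as [h|[h|h]].
  - destruct (H _ _ h) as [n Hn]. unfold Rabs. destruct Rcase_abs, Rcase_abs; lra.
  - subst. lra.
  - destruct (H _ _ h) as [n Hn]. unfold Rabs. destruct Rcase_abs, Rcase_abs; lra.
Qed.

Definition PP S c := SY S c.

Lemma min1 x : 1 <= x -> Rmin 1 x = 1.
Proof. intro. unfold Rmin. destruct Rle_dec; lra. Qed.
Lemma min2 x : x <= 1 -> Rmin 1 x = x.
Proof. intro. unfold Rmin. destruct Rle_dec; lra. Qed.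

Lemma ww_le_M' S y : aa S y + ww S y <= MM S.
Proof. rewrite (partition S y). pose proof (gtm_nonneg S y). lra. Qed.

Lemma no_int_between (a b : Z) : IZR a < IZR b -> IZR b < IZR a + 1 -> False.
Proof.
  intros H1 H2. apply lt_IZR in H1. rewrite <- plus_IZR in H2. apply lt_IZR in H2. lia.
Qed.

Lemma izr_step (a b : Z) : IZR a < IZR b -> IZR a + 1 <= IZR b.
Proof. intro H. apply lt_IZR in H. rewrite <- plus_IZR. apply IZR_le. lia. Qed.

Lemma SY3 S y al be ga : SY S (fun z => al * ind (fun u => ylt S u y) z + be * ind (fun u => u = y) z + ga * ind (fun u => ylt S y u) z)
   = al * aa S y + be * ww S y + ga * gtm S y.
Proof.
  rewrite SY_plus, SY_plus, !SY_scal. unfold aa, gtm. rewrite <- mes_single. reflexivity.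
  all: repeat apply bnd_plus; apply bnd_scal; apply bnd_ind.
Qed.

Lemma ind3 S y z : ind (fun u => ylt S u y) z + ind (fun u => u = y) z + ind (fun u => ylt S y u) z = 1.
Proof.
  destruct (ylt_tot S z y) as [h|[h|h]].
  - rewrite (ind_true (fun u => ylt S u y) z h).
    rewrite (ind_false (fun u => u = y) z). rewrite (ind_false (fun u => ylt S y u) z). lra.
    intro; eapply ylt_irr; eauto using ylt_trans. intro; subst; eapply ylt_irr; eauto.
  - subst z. rewrite (ind_false (fun u => ylt S u y) y), (ind_true (fun u => u = y) y), (ind_false (fun u => ylt S y u) y); auto; try lra; apply ylt_irr.
  - rewrite (ind_true (fun u => ylt S y u) z h).
    rewrite (ind_false (fun u => u = y) z). rewrite (ind_false (fun u => ylt S u y) z). lra.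
    intro; eapply ylt_irr; eauto using ylt_trans. intro; subst; eapply ylt_irr; eauto.
Qed.

Lemma ind_case_lt S y z : ylt S z y -> ind (fun u => ylt S u y) z = 1 /\ ind (fun u => u = y) z = 0 /\ ind (fun u => ylt S y u) z = 0.
Proof.
  intro h. split; [apply ind_true; auto|split; apply ind_false].
  intro; subst; eapply ylt_irr; eauto. intro; eapply ylt_irr; eauto using ylt_trans.
Qed.
Lemma ind_case_eq S y : ind (fun u => ylt S u y) y = 0 /\ ind (fun u => u = y) y = 1 /\ ind (fun u => ylt S y u) y = 0.
Proof. split; [apply ind_false, ylt_irr|split; [apply ind_true; auto|apply ind_false, ylt_irr]]. Qed.
Lemma ind_case_gt S y z : ylt S y z -> ind (fun u => ylt S u y) z = 0 /\ ind (fun u => u = y) z = 0 /\ ind (fun u => ylt S y u) z = 1.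
Proof.
  intro h. split; [apply ind_false|split; [apply ind_false| apply ind_true; auto]].
  intro; eapply ylt_irr; eauto using ylt_trans. intro; subst; eapply ylt_irr; eauto.
Qed.

Lemma C3 S c y : config S c -> count S y (PP S c) = c y.
Proof.
  intro Hc. pose proof (MM_pos S) as HM. pose proof (ww_pos S y) as Hw.
  pose proof (partition S y) as Hpart. pose proof (aa_nonneg S y). pose proof (gtm_nonneg S y).
  pose proof (config_bnd S c Hc) as Hb.
  set (k := fl (c y)). pose proof (fl_spec (c y)) as Hk. fold k in Hk.
  assert (Hbd : bnd S (fun z => IZR k * ind (fun u => ylt S u y) z + IZR k * ind (fun u => u = y) z + IZR k * ind (fun u => ylt S y u) z)).
  { repeat apply bnd_plus; apply bnd_scal; apply bnd_ind. }
  destruct (Req_dec (c y) (IZR k)) as [Hi|Hi].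
  -
    assert (Hup : PP S c <= IZR k * MM S + aa S y).
    { unfold PP. transitivity (SY S (fun z => (IZR k + 1) * ind (fun u => ylt S u y) z + IZR k * ind (fun u => u = y) z + IZR k * ind (fun u => ylt S y u) z)).
      - apply SY_le; auto. repeat apply bnd_plus; apply bnd_scal; apply bnd_ind.
        intro z. destruct (ylt_tot S z y) as [h|[h|h]].
        + destruct (ind_case_lt S y z h) as [-> [-> ->]]. destruct (Hc _ _ h) as [n Hn]. lra.
        + subst. destruct (ind_case_eq S y) as [-> [-> ->]]. lra.
        + destruct (ind_case_gt S y z h) as [-> [-> ->]]. destruct (Hc _ _ h) as [n Hn]. lra.
      - rewrite SY3, Hpart. right; ring. }
    assert (Hlo : IZR k * MM S - gtm S y <= PP S c).
    { unfold PP. transitivity (SY S (fun z => IZR k * ind (fun u => ylt S u y) z + IZR k * ind (fun u => u = y) z + (IZR k - 1) * ind (fun u => ylt S y u) z)).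
      - rewrite SY3, Hpart. right; ring.
      - apply SY_le; auto. repeat apply bnd_plus; apply bnd_scal; apply bnd_ind.
        intro z. destruct (ylt_tot S z y) as [h|[h|h]].
        + destruct (ind_case_lt S y z h) as [-> [-> ->]]. destruct (Hc _ _ h) as [n Hn]. lra.
        + subst. destruct (ind_case_eq S y) as [-> [-> ->]]. lra.
        + destruct (ind_case_gt S y z h) as [-> [-> ->]]. destruct (Hc _ _ h) as [n Hn].
          destruct Hn as [H1 [H2 [H3 [E|E]]]]; lra. }
    rewrite Hi. destruct (Req_dec (PP S c - aa S y) (IZR k * MM S)) as [E|E].
    + rewrite (count_eq S y _ k 0). unfold Rdiv; rewrite Rmult_0_l. rewrite min2; lra. lra. lra.
    + rewrite (count_eq S y _ (k - 1) (PP S c - aa S y - IZR (k - 1) * MM S)). 2: ring.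
      * rewrite minus_IZR. rewrite min1. ring. apply (Rmult_le_reg_r (ww S y)); auto.
        unfold Rdiv. rewrite Rmult_assoc, Rinv_l, Rmult_1_r by lra. lra.
      * rewrite minus_IZR. lra.
  -
    assert (Hf : 0 < c y - IZR k < 1).
    { destruct Hk as [H1 H2]. destruct H1 as [H1|H1]; [lra|]. exfalso; apply Hi; lra. }
    set (th := c y - IZR k) in *.
    assert (Heq : PP S c = IZR k * MM S + aa S y + th * ww S y).
    { unfold PP. rewrite (SY_ext S c (fun z => (IZR k + 1) * ind (fun u => ylt S u y) z + (IZR k + th) * ind (fun u => u = y) z + IZR k * ind (fun u => ylt S y u) z)).
      - rewrite SY3, Hpart. ring.
      - intro z. destruct (ylt_tot S z y) as [h|[h|h]].
        + destruct (ind_case_lt S y z h) as [-> [-> ->]].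
          destruct (Hc _ _ h) as [n Hn]. destruct Hn as [H1 [H2 [H3 [E|E]]]].
          * assert (n = k). { destruct (Z.lt_trichotomy n k) as [l|[l|l]]; auto; apply IZR_lt in l.
              exfalso. apply (no_int_between n k); lra. exfalso. apply (no_int_between k n); lra. }
            subst. lra.
          * exfalso. apply (no_int_between k n); unfold th in Hf; lra.
        + subst. destruct (ind_case_eq S y) as [-> [-> ->]]. unfold th. lra.
        + destruct (ind_case_gt S y z h) as [-> [-> ->]].
          destruct (Hc _ _ h) as [n Hn]. destruct Hn as [H1 [H2 [H3 [E|E]]]].
          * exfalso. apply (no_int_between k (n+1)); unfold th in Hf; rewrite plus_IZR; lra.
          * assert (n = k). { destruct (Z.lt_trichotomy n k) as [l|[l|l]]; auto; apply IZR_lt in l.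
              exfalso. apply izr_step in l. unfold th in Hf. lra. exfalso. apply (no_int_between k n); unfold th in Hf; lra. }
            subst; lra. }
    rewrite (count_eq S y _ k (th * ww S y)).
    + rewrite min2. unfold th. field. lra. unfold Rdiv. rewrite Rmult_assoc, Rinv_r, Rmult_1_r; lra.
    + lra.
    + split. nra. pose proof (ww_le_M' S y). nra.
Qed.

Open Scope R_scope.

Lemma min_rng x : 0 <= x -> 0 <= Rmin 1 x <= 1.
Proof. intro. unfold Rmin. destruct Rle_dec; lra. Qed.

Lemma div_ge1 a b : 0 < b -> b <= a -> 1 <= a / b.
Proof. intros. apply (Rmult_le_reg_r b); auto. unfold Rdiv. rewrite Rmult_assoc, Rinv_l, Rmult_1_r; lra. Qed.
Lemma div_nonneg a b : 0 < b -> 0 <= a -> 0 <= a / b.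
Proof. intros. unfold Rdiv. apply Rmult_le_pos; auto. left; apply Rinv_0_lt_compat; auto. Qed.

Lemma C1 S t : config S (fun y => count S y t).
Proof.
  intros y z Hyz. pose proof (MM_pos S) as HM.
  pose proof (aa_lt S y z Hyz). pose proof (ww_le_M' S z). pose proof (aa_nonneg S y).
  pose proof (ww_pos S y). pose proof (ww_pos S z).
  destruct (count_gen S y t) as [j [r [E Hr]]].
  rewrite (count_eq S y t j r E Hr).
  destruct (Rle_dec (aa S z - aa S y) r) as [Hc|Hc].
  - rewrite (count_eq S z t j (r - (aa S z - aa S y))) by lra.
    rewrite (min1 (r / ww S y)) by (apply div_ge1; lra).
    pose proof (min_rng ((r - (aa S z - aa S y)) / ww S z)). 
    assert (0 <= (r - (aa S z - aa S y)) / ww S z) by (apply div_nonneg; lra).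
    specialize (H4 H5).
    exists j. lra.
  - rewrite (count_eq S z t (j - 1) (r - (aa S z - aa S y) + MM S)).
    2: rewrite minus_IZR; lra. 2: lra.
    rewrite (min1 ((r - (aa S z - aa S y) + MM S) / ww S z)) by (apply div_ge1; lra).
    assert (0 <= r / ww S y) by (apply div_nonneg; lra).
    pose proof (min_rng _ H4). rewrite minus_IZR.
    exists j. lra.
Qed.

Lemma count_shift S y t k : count S y (t + IZR k * MM S) = IZR k + count S y t.
Proof.
  destruct (count_gen S y t) as [j [r [E Hr]]].
  rewrite (count_eq S y t j r E Hr).
  rewrite (count_eq S y _ (j + k) r). rewrite plus_IZR; ring. rewrite plus_IZR. lra. auto.
Qed.

Lemma count_mono S y t1 t2 : t1 <= t2 -> count S y t1 <= count S y t2.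
Proof.
  intro Ht. pose proof (MM_pos S). pose proof (ww_pos S y).
  destruct (count_gen S y t1) as [j1 [r1 [E1 H1]]].
  destruct (count_gen S y t2) as [j2 [r2 [E2 H2]]].
  rewrite (count_eq S y t1 j1 r1 E1 H1), (count_eq S y t2 j2 r2 E2 H2).
  assert (0 <= r1 / ww S y) by (apply div_nonneg; lra).
  assert (0 <= r2 / ww S y) by (apply div_nonneg; lra).
  pose proof (min_rng _ H3). pose proof (min_rng _ H4).
  destruct (Z.lt_trichotomy j1 j2) as [l|[l|l]].
  - apply IZR_lt in l. apply izr_step in l. lra.
  - subst. assert (r1 <= r2) by lra. apply Rplus_le_compat_l.
    assert (r1 / ww S y <= r2 / ww S y).
    { apply Rmult_le_compat_r; auto. left; apply Rinv_0_lt_compat; auto. }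
    unfold Rmin. destruct Rle_dec, Rle_dec; lra.
  - exfalso. apply IZR_lt in l. apply izr_step in l.
    assert (IZR j1 * MM S >= (IZR j2 + 1) * MM S) by (apply Rle_ge, Rmult_le_compat_r; lra). nra.
Qed.

Lemma count_base S y t : 0 <= t < MM S ->
  count S y t = if Rle_dec (aa S y) t then Rmin 1 ((t - aa S y) / ww S y) else 0.
Proof.
  intro Ht. pose proof (ww_le_M' S y). pose proof (aa_nonneg S y). pose proof (ww_pos S y).
  destruct Rle_dec.
  - rewrite (count_eq S y t 0 (t - aa S y)). simpl; ring. simpl; ring. lra.
  - rewrite (count_eq S y t (-1) (t - aa S y + MM S)). rewrite min1. simpl; ring.
    apply div_ge1; lra. simpl. ring. lra.
Qed.

Lemma PP_shift S c k : bnd S c -> PP S (fun y => IZR k + c y) = IZR k * MM S + PP S c.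
Proof. intro. unfold PP. rewrite SY_plus, SY_const; auto. apply bnd_const. Qed.

Lemma fin_max S (P : Yt S -> Prop) N :
  (forall y, P y -> (ycode S y < N)%nat -> False) \/
  (exists y, P y /\ (ycode S y < N)%nat /\ forall z, P z -> (ycode S z < N)%nat -> z = y \/ ylt S z y).
Proof.
  induction N as [|N IH].
  - left. intros; lia.
  - destruct (classic (exists y, P y /\ ycode S y = N)) as [[y [Hy Hc]]|Hn].
    + right. destruct IH as [IH|[x [Hx [Hxc Hxm]]]].
      * exists y. split; auto. split; [lia|]. intros z Hz Hzc.
        destruct (Nat.eq_dec (ycode S z) N). left; apply ycode_inj; congruence. exfalso; apply (IH z); auto; lia.
      * destruct (ylt_tot S x y) as [h|[h|h]].
        -- exists y. split; auto. split; [lia|]. intros z Hz Hzc.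
           destruct (Nat.eq_dec (ycode S z) N). left; apply ycode_inj; congruence.
           destruct (Hxm z Hz ltac:(lia)) as [->|h']; right; eauto using ylt_trans.
        -- subst. exfalso; lia.
        -- exists x. split; auto. split; [lia|]. intros z Hz Hzc.
           destruct (Nat.eq_dec (ycode S z) N). right. replace z with y; auto. apply ycode_inj; congruence.
           apply Hxm; auto; lia.
    + destruct IH as [IH|[x [Hx [Hxc Hxm]]]].
      * left. intros y Hy Hyc. destruct (Nat.eq_dec (ycode S y) N). apply Hn; eauto. apply (IH y); auto; lia.
      * right. exists x. split; auto. split; [lia|]. intros z Hz Hzc.
        destruct (Nat.eq_dec (ycode S z) N). exfalso; apply Hn; eauto. apply Hxm; auto; lia.
Qed.

Lemma fin_min S (P : Yt S -> Prop) N :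
  (forall y, P y -> (ycode S y < N)%nat -> False) \/
  (exists y, P y /\ (ycode S y < N)%nat /\ forall z, P z -> (ycode S z < N)%nat -> z = y \/ ylt S y z).
Proof.
  induction N as [|N IH].
  - left. intros; lia.
  - destruct (classic (exists y, P y /\ ycode S y = N)) as [[y [Hy Hc]]|Hn].
    + right. destruct IH as [IH|[x [Hx [Hxc Hxm]]]].
      * exists y. split; auto. split; [lia|]. intros z Hz Hzc.
        destruct (Nat.eq_dec (ycode S z) N). left; apply ycode_inj; congruence. exfalso; apply (IH z); auto; lia.
      * destruct (ylt_tot S x y) as [h|[h|h]].
        -- exists x. split; auto. split; [lia|]. intros z Hz Hzc.
           destruct (Nat.eq_dec (ycode S z) N). right. replace z with y; auto. apply ycode_inj; congruence.
           apply Hxm; auto; lia.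
        -- subst. exfalso; lia.
        -- exists y. split; auto. split; [lia|]. intros z Hz Hzc.
           destruct (Nat.eq_dec (ycode S z) N). left; apply ycode_inj; congruence.
           destruct (Hxm z Hz ltac:(lia)) as [->|h']; right; eauto using ylt_trans.
    + destruct IH as [IH|[x [Hx [Hxc Hxm]]]].
      * left. intros y Hy Hyc. destruct (Nat.eq_dec (ycode S y) N). apply Hn; eauto. apply (IH y); auto; lia.
      * right. exists x. split; auto. split; [lia|]. intros z Hz Hzc.
        destruct (Nat.eq_dec (ycode S z) N). exfalso; apply Hn; eauto. apply Hxm; auto; lia.
Qed.

Lemma SY_partial_le S f N : bnd S f -> (forall y, 0 <= f y) -> sum_f_R0 (term S f) N <= SY S f.
Proof.
  intros Hb Hp. unfold SY. pose proof (Series_correct _ (ex_term S f Hb)) as Hc.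
  apply is_series_Reals in Hc. apply sum_incr; auto.
  intro n. unfold term. destruct (dec S n). pose proof (gw_pos n). specialize (Hp y). nra. lra.
Qed.

Lemma bb_mes S y : mes S (fun z => ylt S z y \/ z = y) = aa S y + ww S y.
Proof.
  rewrite mes_disj. unfold aa. rewrite mes_single. auto.
  intros z [h e]; subst; eapply ylt_irr; eauto.
Qed.

Open Scope R_scope.

Lemma C2base S t : 0 <= t < MM S -> PP S (fun y => count S y t) = t.
Proof.
  intro Ht. pose proof (MM_pos S) as HM.
  destruct (classic (exists f, aa S f < t < aa S f + ww S f)) as [[f Hf]|Hno].
  - pose proof (ww_pos S f).
    set (th := (t - aa S f) / ww S f).
    unfold PP. rewrite (SY_ext S _ (fun z => 1 * ind (fun u => ylt S u f) z + th * ind (fun u => u = f) z + 0 * ind (fun u => ylt S f u) z)).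
    + rewrite SY3. unfold th. field. lra.
    + intro z. rewrite count_base by auto. destruct (ylt_tot S z f) as [h|[h|h]].
      * destruct (ind_case_lt S f z h) as [-> [-> ->]]. pose proof (aa_lt S z f h). pose proof (ww_pos S z).
        destruct Rle_dec; [|lra]. rewrite min1. ring. apply div_ge1; lra.
      * subst. destruct (ind_case_eq S f) as [-> [-> ->]]. destruct Rle_dec; [|lra]. rewrite min2. fold th. ring.
        unfold th. apply (Rmult_le_reg_r (ww S f)); auto. unfold Rdiv. rewrite Rmult_assoc, Rinv_l, Rmult_1_r; lra.
      * destruct (ind_case_gt S f z h) as [-> [-> ->]]. pose proof (aa_lt S f z h).
        destruct Rle_dec; [lra|]. ring.
  - set (D := fun y => aa S y + ww S y <= t).
    assert (Hcnt : forall y, count S y t = ind D y).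
    { intro y. rewrite count_base by auto. pose proof (ww_pos S y). destruct (classic (D y)) as [Hd|Hd].
      - rewrite ind_true by auto. unfold D in Hd. destruct Rle_dec; [|lra]. rewrite min1; auto. apply div_ge1; lra.
      - rewrite ind_false by auto. unfold D in Hd.
        assert (t <= aa S y). { destruct (Rle_dec t (aa S y)); auto. exfalso. apply Hno. exists y. lra. }
        destruct Rle_dec. assert (aa S y = t) by lra. rewrite H1, Rminus_eq_0. unfold Rdiv; rewrite Rmult_0_l. apply min2; lra.
        auto. }
    unfold PP. rewrite (SY_ext S _ (ind D)) by auto. fold (mes S D).
    assert (Hle : mes S D <= t).
    { apply SY_le_bound. apply bnd_ind. intro N.
      destruct (fin_max S D (Datatypes.S N)) as [Hn|[ys [Hys [Hysc Hysm]]]].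
      - eapply Rle_trans. apply (sum_Rle _ (fun _ => 0)). intros n Hn'. unfold term. destruct (dec S n) eqn:E; [|lra].
        apply dec_some in E. rewrite ind_false. lra. intro. apply (Hn y); auto. lia.
        rewrite sum_cte. lra.
      - eapply Rle_trans. apply (sum_Rle _ (term S (ind (fun z => ylt S z ys \/ z = ys)))).
        + intros n Hn'. unfold term. destruct (dec S n) eqn:E; [|lra].
          apply dec_some in E. pose proof (gw_pos n).
          destruct (classic (D y)) as [Hd|Hd].
          * rewrite ind_true by auto. rewrite ind_true. lra. destruct (Hysm y Hd) as [->|h]; auto. lia.
          * rewrite ind_false by auto. pose proof (ind_range (fun z => ylt S z ys \/ z = ys) y). nra.
        + eapply Rle_trans. apply SY_partial_le. apply bnd_ind. intro; apply ind_range.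
          fold (mes S (fun z => ylt S z ys \/ z = ys)). rewrite bb_mes. apply Hys. }
    destruct Hle as [Hlt|]; auto. exfalso.
    destruct (pow_half_small (t - mes S D)) as [N HN]. lra.
    destruct (fin_min S (fun y => ~ D y) N) as [Hn|[f [Hf [Hfc Hfm]]]].
    + assert (mes S (fun y => ~ D y) <= (/2)^N).
      { eapply Rle_trans; [|apply tail_bound]. apply mes_mono. intros y Hy.
        destruct (le_lt_dec N (ycode S y)); auto. exfalso; apply (Hn y); auto. }
      pose proof (mes_split S (fun _ => True) D) as Hs. rewrite mes_full in Hs.
      rewrite (mes_ext S (fun y => True /\ D y) D) in Hs by tauto.
      rewrite (mes_ext S (fun y => True /\ ~ D y) (fun y => ~ D y)) in Hs by tauto. lra.
    + assert (aa S f <= mes S D + (/2)^N).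
      { eapply Rle_trans; [|apply Rplus_le_compat_l, tail_bound].
        apply mes_sub. intros y Hy. destruct (classic (D y)) as [Hd|Hd]; auto. right.
        destruct (le_lt_dec N (ycode S y)); auto. exfalso. destruct (Hfm y Hd l) as [->|h].
        eapply ylt_irr; eauto. eapply ylt_irr; eauto using ylt_trans. }
      apply Hno. exists f. unfold D in Hf. lra.
Qed.

Lemma C2 S t : PP S (fun y => count S y t) = t.
Proof.
  pose proof (MM_pos S) as HM. set (k := fl (t / MM S)). pose proof (fl_spec (t / MM S)) as Hk. fold k in Hk.
  set (t' := t - IZR k * MM S).
  assert (Ht' : 0 <= t' < MM S).
  { unfold t'. destruct Hk as [H1 H2]. split.
    - apply (Rmult_le_compat_r (MM S)) in H1; [|lra]. unfold Rdiv in H1. rewrite Rmult_assoc, Rinv_l in H1; lra.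
    - apply (Rmult_lt_compat_r (MM S)) in H2; [|lra]. unfold Rdiv in H2. rewrite Rmult_plus_distr_r, Rmult_assoc, Rinv_l in H2; lra. }
  unfold PP. rewrite (SY_ext S _ (fun y => IZR k + count S y t')).
  2:{ intro y. unfold t'. replace t with ((t - IZR k * MM S) + IZR k * MM S) at 1 by ring. apply count_shift. }
  fold (PP S (fun y => IZR k + count S y t')). rewrite PP_shift. rewrite C2base; auto. unfold t'. ring.
  apply config_bnd, C1.
Qed.

Open Scope R_scope.

Definition ltL S (k1:Z) (y1:Yt S) (k2:Z) (y2:Yt S) := (k1 < k2)%Z \/ (k1 = k2 /\ ylt S y1 y2).

Record Aut S := mkAut {
  adl : Yt S -> Z; asf : Yt S -> Yt S; asi : Yt S -> Yt S;
  a_s_si : forall y, asf (asi y) = y; a_si_s : forall y, asi (asf y) = y;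
  a_ord : forall k1 y1 k2 y2, ltL S k1 y1 k2 y2 -> ltL S (k1 + adl y1) (asf y1) (k2 + adl y2) (asf y2) }.
Arguments adl {S} _ _. Arguments asf {S} _ _. Arguments asi {S} _ _.
Arguments a_s_si {S} _ _. Arguments a_si_s {S} _ _. Arguments a_ord {S} _ _ _ _ _ _.

Lemma ltL_irr S k y : ~ ltL S k y k y.
Proof. intros [h|[_ h]]. lia. eapply ylt_irr; eauto. Qed.
Lemma ltL_asym S k1 y1 k2 y2 : ltL S k1 y1 k2 y2 -> ltL S k2 y2 k1 y1 -> False.
Proof. intros [h|[e h]] [h'|[e' h']]; try lia. eapply ylt_irr; eauto using ylt_trans. Qed.
Lemma ltL_tot S k1 y1 k2 y2 : ltL S k1 y1 k2 y2 \/ (k1 = k2 /\ y1 = y2) \/ ltL S k2 y2 k1 y1.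
Proof.
  unfold ltL. destruct (Z.lt_trichotomy k1 k2) as [h|[h|h]]; auto. subst.
  destruct (ylt_tot S y1 y2) as [h|[h|h]]; auto.
Qed.
Lemma ltL_trans S k1 y1 k2 y2 k3 y3 : ltL S k1 y1 k2 y2 -> ltL S k2 y2 k3 y3 -> ltL S k1 y1 k3 y3.
Proof. unfold ltL. intros [h|[e h]] [h'|[e' h']]; subst; try (left; lia). right; eauto using ylt_trans. Qed.

Lemma a_back S (s : Aut S) k1 y1 k2 y2 :
  ltL S (k1 + adl s y1) (asf s y1) (k2 + adl s y2) (asf s y2) -> ltL S k1 y1 k2 y2.
Proof.
  intro H. destruct (ltL_tot S k1 y1 k2 y2) as [h|[[e1 e2]|h]]; auto; exfalso.
  - subst. eapply ltL_irr; eauto.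
  - apply (a_ord s) in h. eapply ltL_asym; eauto.
Qed.

Lemma C4 S (s : Aut S) c : config S c -> config S (fun y => IZR (adl s (asi s y)) + c (asi s y)).
Proof.
  intros Hc y1' y2' H12.
  set (y1 := asi s y1') in *. set (y2 := asi s y2') in *.
  set (d1 := adl s y1). set (d2 := adl s y2).
  assert (A : ltL S (-d1) y1 (-d2) y2).
  { apply (a_back S s). replace (-d1 + adl s y1)%Z with 0%Z by (unfold d1; lia).
    replace (-d2 + adl s y2)%Z with 0%Z by (unfold d2; lia). unfold y1, y2. rewrite !a_s_si. right; auto. }
  assert (B : ltL S (-d2) y2 (1 - d1) y1).
  { apply (a_back S s). replace (-d2 + adl s y2)%Z with 0%Z by (unfold d2; lia).
    replace (1 - d1 + adl s y1)%Z with 1%Z by (unfold d1; lia). left; lia. }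
  destruct A as [A|[Ae A]]; destruct B as [B|[Be B]]; try lia.
  -
    assert (d2 = d1 - 1)%Z by lia.
    destruct (Hc _ _ B) as [n [H1 [H2 [H3 [E|E]]]]].
    + exists (d1 + n)%Z. rewrite H, plus_IZR, minus_IZR. split; [lra|split;[lra|split;[lra|]]]; right; lra.
    + exists (d1 + n - 1)%Z. rewrite H, minus_IZR, plus_IZR, minus_IZR. split; [lra|split;[lra|split;[lra|]]]; left; lra.
  - assert (d1 = d2) by lia. rewrite H.
    destruct (Hc _ _ A) as [n [H1 [H2 [H3 [E|E]]]]].
    + exists (d2 + n)%Z. rewrite plus_IZR. split; [lra|split;[lra|split;[lra|]]]; left; lra.
    + exists (d2 + n)%Z. rewrite plus_IZR. split; [lra|split;[lra|split;[lra|]]]; right; lra.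
Qed.

Definition psi S (s : Aut S) (t : R) : R := PP S (fun y => IZR (adl s (asi s y)) + count S (asi s y) t).

Lemma psi_count S (s : Aut S) t y : count S y (psi S s t) = IZR (adl s (asi s y)) + count S (asi s y) t.
Proof.
  unfold psi. rewrite C3. auto. apply (C4 S s (fun y => count S y t)). apply C1.
Qed.

Lemma psi_ext S (s1 s2 : Aut S) : (forall y, asi s1 y = asi s2 y /\ adl s1 (asi s1 y) = adl s2 (asi s2 y)) ->
  forall t, psi S s1 t = psi S s2 t.
Proof.
  intros H t. unfold psi, PP. apply SY_ext. intro y. destruct (H y) as [e1 e2]. rewrite e2, e1. auto.
Qed.

Program Definition aut_id S : Aut S := mkAut S (fun _ => 0%Z) (fun y => y) (fun y => y) _ _ _.
Next Obligation. rewrite !Z.add_0_r. auto. Qed.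

Program Definition aut_comp S (s t : Aut S) : Aut S :=
  mkAut S (fun y => adl t y + adl s (asf t y))%Z (fun y => asf s (asf t y)) (fun y => asi t (asi s y)) _ _ _.
Next Obligation. rewrite !a_s_si. auto. Qed.
Next Obligation. rewrite !a_si_s. auto. Qed.
Next Obligation. rewrite !Z.add_assoc. apply (a_ord s). apply (a_ord t). auto. Qed.

Program Definition aut_inv S (s : Aut S) : Aut S :=
  mkAut S (fun y => - adl s (asi s y))%Z (asi s) (asf s) _ _ _.
Next Obligation. apply a_si_s. Qed.
Next Obligation. apply a_s_si. Qed.
Next Obligation.
  apply (a_back S s). rewrite !a_s_si.
  replace (k1 + - adl s (asi s y1) + adl s (asi s y1))%Z with k1 by lia.
  replace (k2 + - adl s (asi s y2) + adl s (asi s y2))%Z with k2 by lia. auto.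
Qed.

Lemma psi_id S t : psi S (aut_id S) t = t.
Proof.
  transitivity (PP S (fun y => count S y t)). 2: apply C2.
  unfold psi, PP. apply SY_ext. intro; simpl; ring.
Qed.

Lemma psi_comp S (s u : Aut S) t : psi S (aut_comp S s u) t = psi S s (psi S u t).
Proof.
  unfold psi at 1 2. unfold PP. apply SY_ext. intro y. simpl.
  rewrite psi_count. rewrite a_s_si. rewrite plus_IZR. ring.
Qed.

Lemma psi_inv S (s : Aut S) t : psi S s (psi S (aut_inv S s) t) = t.
Proof.
  rewrite <- psi_comp. rewrite <- (psi_id S t) at 2. apply psi_ext. intro y. simpl.
  rewrite a_s_si. split; auto. lia.
Qed.

Lemma count_strict S t1 t2 : t1 < t2 -> exists y, count S y t1 < count S y t2.
Proof.
  intro H. apply NNPP. intro Hn.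
  assert (forall y, count S y t1 = count S y t2).
  { intro y. pose proof (count_mono S y t1 t2 ltac:(lra)). destruct H0; auto. exfalso; apply Hn; eauto. }
  rewrite <- (C2 S t1), <- (C2 S t2) in H. unfold PP in H. rewrite (SY_ext S _ _ H0) in H. lra.
Qed.

Lemma psi_incr S (s : Aut S) t1 t2 : t1 < t2 -> psi S s t1 < psi S s t2.
Proof.
  intro H. destruct (count_strict S t1 t2 H) as [y Hy].
  unfold psi, PP.
  assert (0 < SY S (fun z => (IZR (adl s (asi s z)) + count S (asi s z) t2) - (IZR (adl s (asi s z)) + count S (asi s z) t1))).
  { apply (SY_pos S _ (asf s y)).
    - apply bnd_plus. apply (config_bnd S _ (C4 S s _ (C1 S t2))). apply bnd_opp. apply (config_bnd S _ (C4 S s _ (C1 S t1))).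
    - intro z. pose proof (count_mono S (asi s z) t1 t2). lra.
    - rewrite a_si_s. lra. }
  rewrite SY_minus in H0. lra.
  apply (config_bnd S _ (C4 S s _ (C1 S t2))). apply (config_bnd S _ (C4 S s _ (C1 S t1))).
Qed.

Lemma psi_shift S (s : Aut S) t k : psi S s (t + IZR k * MM S) = psi S s t + IZR k * MM S.
Proof.
  unfold psi. rewrite (SY_ext S _ (fun y => IZR k + (IZR (adl s (asi s y)) + count S (asi s y) t))).
  fold (PP S (fun y => IZR k + (IZR (adl s (asi s y)) + count S (asi s y) t))). rewrite PP_shift. ring.
  apply (config_bnd S _ (C4 S s _ (C1 S t))).
  intro y. rewrite count_shift. ring.
Qed.

Lemma half_int (a b : Z) : IZR a + /2 = IZR b + 1 -> False.
Proof.
  intro H. assert (IZR (2 * a + 1) = IZR (2 * b + 2)).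
  { rewrite !plus_IZR, !mult_IZR. simpl. lra. }
  apply eq_IZR in H0. lia.
Qed.

Lemma psi_faith S (s u : Aut S) : (forall t, psi S s t = psi S u t) ->
  forall y, asf s y = asf u y /\ adl s y = adl u y.
Proof.
  intros H y. pose proof (ww_pos S y). pose proof (ww_le_M' S y). pose proof (aa_nonneg S y).
  set (t := aa S y + ww S y / 2).
  assert (Hc : count S y t = /2).
  { rewrite count_base by (unfold t; lra). destruct Rle_dec; [|unfold t in n; lra].
    unfold t. replace ((aa S y + ww S y / 2 - aa S y) / ww S y) with (/2) by (field; lra).
    apply min2; lra. }
  pose proof (psi_count S s t (asf s y)) as E1. rewrite a_si_s, Hc in E1.
  pose proof (psi_count S u t (asf u y)) as E2. rewrite a_si_s, Hc in E2.
  rewrite <- (H t) in E2. set (v := psi S s t) in *.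
  assert (Heq : asf s y = asf u y).
  { destruct (ylt_tot S (asf s y) (asf u y)) as [h|[h|h]]; auto; exfalso.
    - destruct (C1 S v _ _ h) as [n [_ [_ [_ [E|E]]]]].
      rewrite E1 in E. eapply half_int; eauto.
      rewrite E2 in E. apply (half_int (adl u y) (n - 1)). rewrite minus_IZR. lra.
    - destruct (C1 S v _ _ h) as [n [_ [_ [_ [E|E]]]]].
      rewrite E2 in E. eapply half_int; eauto.
      rewrite E1 in E. apply (half_int (adl s y) (n - 1)). rewrite minus_IZR. lra. }
  split; auto. rewrite Heq in E1. rewrite E1 in E2. apply eq_IZR. lra.
Qed.

Open Scope R_scope.

Program Definition aut_shift S (e : Z) : Aut S := mkAut S (fun _ => e) (fun y => y) (fun y => y) _ _ _.
Next Obligation.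
  destruct H as [h|[h1 h2]]. left; lia. right; split; auto; lia.
Qed.

Lemma psi_shiftA S e u : psi S (aut_shift S e) u = u + IZR e * MM S.
Proof.
  unfold psi. simpl. fold (PP S (fun y => IZR e + count S y u)). rewrite PP_shift. rewrite C2. ring.
  apply config_bnd, C1.
Qed.

Lemma asi_det S (s t : Aut S) : (forall y, asf s y = asf t y) -> forall y, asi s y = asi t y.
Proof.
  intros H y. rewrite <- (a_s_si t y) at 1. rewrite <- H. apply a_si_s.
Qed.

Lemma aut_const_diff S (s t : Aut S) : (forall y, asf s y = asf t y) ->
  exists e, forall y, adl s y = (adl t y + e)%Z.
Proof.
  intro H. exists (adl s (ypt S) - adl t (ypt S))%Z.
  assert (K : forall y y', ylt S y y' -> (adl s y' - adl s y = adl t y' - adl t y)%Z).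
  { intros y y' h.
    assert (G : forall u : Aut S, (adl u y = adl u y' /\ ylt S (asf u y) (asf u y')) \/ (adl u y' = adl u y + 1 /\ ylt S (asf u y') (asf u y))%Z).
    { intro u. pose proof (a_ord u 0 y 0 y' (or_intror (conj eq_refl h))) as A1.
      pose proof (a_ord u 0 y' 1 y ltac:(left; lia)) as A2.
      destruct A1 as [A1|[A1 A1']]; destruct A2 as [A2|[A2 A2']]; try lia.
      - right. split. lia. auto.
      - left. split. lia. auto. }
    pose proof (G s) as Gs. pose proof (G t) as Gt. rewrite !H in Gs.
    destruct Gs as [[g1 g2]|[g1 g2]], Gt as [[h1 h2]|[h1 h2]]; try lia.
    - exfalso. apply (ylt_irr S (asf t y)). eapply ylt_trans; eauto.
    - exfalso. apply (ylt_irr S (asf t y)). eapply ylt_trans; eauto. }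
  intro y. destruct (ylt_tot S y (ypt S)) as [h|[h|h]].
  - specialize (K _ _ h). lia.
  - subst. lia.
  - specialize (K _ _ h). lia.
Qed.

Lemma psi_diff S (s t : Aut S) : (forall y, asf s y = asf t y) ->
  exists e : Z, forall x, psi S s x = psi S t x + IZR e * MM S.
Proof.
  intro H. destruct (aut_const_diff S s t H) as [e He]. exists e. intro x.
  rewrite <- psi_shiftA. rewrite <- psi_comp. apply psi_ext. intro y. simpl.
  pose proof (asi_det S s t H y) as E. split; auto. rewrite E, He. lia.
Qed.

Lemma mono_surj_cont (f : R -> R) : (forall x y, x < y -> f x < f y) -> (forall z, exists x, f x = z) -> continuity f.
Proof.
  intros Hm Hs x. unfold continuity_pt, continue_in, limit1_in, limit_in. intros e He.
  destruct (Hs (f x - e)) as [x1 E1]. destruct (Hs (f x + e)) as [x2 E2].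
  assert (x1 < x). { destruct (Rlt_le_dec x1 x); auto. destruct r. apply Hm in H. lra. subst. lra. }
  assert (x < x2). { destruct (Rlt_le_dec x x2); auto. destruct r. apply Hm in H0. lra. subst. lra. }
  exists (Rmin (x - x1) (x2 - x)). split. apply Rmin_pos; lra.
  intros y [_ Hy]. simpl in *. unfold R_dist in *. unfold Rmin in Hy.
  assert (x1 < y < x2). { destruct Rle_dec; apply Rabs_def2 in Hy; lra. }
  assert (f x1 < f y) by (apply Hm; lra). assert (f y < f x2) by (apply Hm; lra).
  apply Rabs_def1; lra.
Qed.

Definition Dd {T} (lt : T -> T -> Prop) (h1 : bool) (r1 : T) (h2 : bool) (r2 : T) : Prop :=
  if Bool.eqb h1 h2 then lt r1 r2 else lt r2 r1.
Definition Eqq {T} (h1 : bool) (r1 : T) (h2 : bool) (r2 : T) : Prop :=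
  if Bool.eqb h1 h2 then r1 = r2 else False.
Definition LTt {T} (lt : T -> T -> Prop) (h1 : bool) (r1 : T) (h2 : bool) (r2 : T) : Prop :=
  if h1 then (if h2 then lt r1 r2 else True) else (if h2 then False else lt r1 r2).

Lemma rebase_abs {T} (lt : T -> T -> Prop) (hu hx hy : bool) (ru rx ry : T)
  (irr : forall a, lt a a -> False)
  (asym : forall a b, lt a b -> lt b a -> False)
  (tr_uxy : lt ru rx -> lt rx ry -> lt ru ry)
  (tr_uyx : lt ru ry -> lt ry rx -> lt ru rx)
  (tr_xuy : lt rx ru -> lt ru ry -> lt rx ry)
  (tr_xyu : lt rx ry -> lt ry ru -> lt rx ru)
  (tr_yux : lt ry ru -> lt ru rx -> lt ry rx)
  (tr_yxu : lt ry rx -> lt rx ru -> lt ry ru)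
  (t1 : lt ru rx \/ ru = rx \/ lt rx ru)
  (t2 : lt rx ry \/ rx = ry \/ lt ry rx)
  (t3 : lt ru ry \/ ru = ry \/ lt ry ru) :
  ~ Eqq hx rx hy ry ->
  ((Dd lt hu ru hx rx \/ Eqq hx rx hu ru) /\ ~ (Dd lt hu ru hy ry \/ Eqq hy ry hu ru)) \/
  (((Dd lt hu ru hx rx \/ Eqq hx rx hu ru) <-> (Dd lt hu ru hy ry \/ Eqq hy ry hu ru)) /\ Dd lt hx rx hy ry) ->
  ((Eqq hu ru hx rx \/ LTt lt hu ru hx rx) /\ LTt lt hx rx hy ry) \/
  (LTt lt hx rx hy ry /\ LTt lt hy ry hu ru) \/
  (LTt lt hy ry hu ru /\ (Eqq hu ru hx rx \/ LTt lt hu ru hx rx)).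
Proof.
  unfold Dd, Eqq, LTt.
  destruct hu, hx, hy; simpl;
  destruct t1 as [h1|[h1|h1]]; destruct t2 as [h2|[h2|h2]]; destruct t3 as [h3|[h3|h3]];
  try (subst; solve [exfalso; eauto]);
  repeat match goal with
  | H : ?a = ?b |- _ => subst a
  | H : ?a = ?b |- _ => subst b
  end;
  try (solve [exfalso; eauto]);
  repeat match goal with
  | H : lt ?a ?b |- _ => assert (~ lt b a) by (intro; eapply asym; eauto);
      assert (a <> b) by (intro; subst; eapply irr; eauto);
      assert (b <> a) by (intro; subst; eapply irr; eauto); revert H
  end; intros;
  try (assert (~ lt ru ru) by (intro; eapply irr; eauto));
  try (assert (~ lt rx rx) by (intro; eapply irr; eauto));
  try (assert (~ lt ry ry) by (intro; eapply irr; eauto));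
  tauto.
Qed.

Open Scope Z_scope.

Definition det2 (p q : Z*Z) : Z := fst p * snd q - snd p * fst q.
Definition halfb (p : Z*Z) : bool := (0 <? snd p) || ((snd p =? 0) && (0 <? fst p)).
Definition prim (p : Z*Z) : Prop := exists x y, x * fst p + y * snd p = 1.
Definition negv (p : Z*Z) : Z*Z := (- fst p, - snd p).
Definition rep (p : Z*Z) : Z*Z := if halfb p then p else negv p.
Definition ltangb (p q : Z*Z) : bool :=
  (halfb p && negb (halfb q)) || (Bool.eqb (halfb p) (halfb q) && (0 <? det2 p q)).

Lemma prim_nz p : prim p -> p <> (0,0).
Proof. intros [x [y H]] E. subst. simpl in H. lia. Qed.

Lemma halfb_neg p : p <> (0,0) -> halfb (negv p) = negb (halfb p).
Proof.
  destruct p as [a b]. intro H. unfold halfb, negv; simpl.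
  destruct (Z.ltb_spec 0 b), (Z.ltb_spec 0 (-b)), (Z.eqb_spec b 0), (Z.eqb_spec (-b) 0),
           (Z.ltb_spec 0 a), (Z.ltb_spec 0 (-a)); simpl; auto; try lia.
  exfalso; apply H; f_equal; lia.
Qed.

Lemma rep_half p : p <> (0,0) -> halfb (rep p) = true.
Proof.
  intro H. unfold rep. destruct (halfb p) eqn:E; auto. rewrite halfb_neg; auto. rewrite E; auto.
Qed.

Lemma prim_neg p : prim p -> prim (negv p).
Proof. intros [x [y H]]. exists (-x), (-y). simpl. lia. Qed.

Lemma prim_rep p : prim p -> prim (rep p).
Proof. intro H. unfold rep. destruct halfb; auto. apply prim_neg; auto. Qed.

Definition sg (p : Z*Z) : Z := if halfb p then 1 else -1.

Lemma det_rep p q : det2 p q = sg p * sg q * det2 (rep p) (rep q).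
Proof. unfold sg, rep, det2, negv. destruct (halfb p), (halfb q); cbn [fst snd]; ring. Qed.

Lemma det_anti p q : det2 p q = - det2 q p.
Proof. unfold det2; ring. Qed.

Lemma prim_par p q : prim p -> prim q -> det2 p q = 0 -> q = p \/ q = negv p.
Proof.
  destruct p as [p1 p2], q as [q1 q2]. intros [x [y Hp]] [x' [y' Hq]] Hd. unfold det2 in Hd; simpl in *.
  set (l := x * q1 + y * q2). set (m := x' * p1 + y' * p2).
  assert (E1 : q1 = l * p1).
  { assert (l * p1 = q1 * (x * p1 + y * p2) + y * (p1 * q2 - p2 * q1)) by (unfold l; ring). rewrite Hp, Hd in H. lia. }
  assert (E2 : q2 = l * p2).
  { assert (l * p2 = q2 * (x * p1 + y * p2) - x * (p1 * q2 - p2 * q1)) by (unfold l; ring). rewrite Hp, Hd in H. lia. }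
  assert (F1 : p1 = m * q1).
  { assert (m * q1 = p1 * (x' * q1 + y' * q2) - y' * (p1 * q2 - p2 * q1)) by (unfold m; ring). rewrite Hq, Hd in H. lia. }
  assert (F2 : p2 = m * q2).
  { assert (m * q2 = p2 * (x' * q1 + y' * q2) + x' * (p1 * q2 - p2 * q1)) by (unfold m; ring). rewrite Hq, Hd in H. lia. }
  assert (Hml : m * l = 1).
  { clearbody l m. assert ((m * l - 1) * p1 = 0) by (rewrite E1 in F1; lia).
    assert ((m * l - 1) * p2 = 0) by (rewrite E2 in F2; lia).
    apply Z.mul_eq_0 in H, H0. destruct H, H0; try lia; subst; lia. }
  assert (l = 1 \/ l = -1) by (rewrite Z.mul_comm in Hml; apply Z.eq_mul_1 in Hml; lia).
  destruct H as [->| ->]. left. f_equal; lia. right. unfold negv; simpl. f_equal; lia.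
Qed.

Lemma prim_same_half p q : prim p -> prim q -> det2 p q = 0 -> halfb p = halfb q -> p = q.
Proof.
  intros Hp Hq Hd Hh. destruct (prim_par p q Hp Hq Hd) as [->| E]; auto.
  subst q. rewrite halfb_neg in Hh by (apply prim_nz; auto). destruct (halfb p); discriminate.
Qed.

Lemma half_facts p : halfb p = true -> 0 <= snd p /\ (snd p = 0 -> 0 < fst p).
Proof.
  unfold halfb. destruct (Z.ltb_spec 0 (snd p)), (Z.eqb_spec (snd p) 0), (Z.ltb_spec 0 (fst p)); simpl; intros; try discriminate; lia.
Qed.

Lemma half_trans a b c : halfb a = true -> halfb b = true -> halfb c = true ->
  0 < det2 a b -> 0 < det2 b c -> 0 < det2 a c.
Proof.
  destruct a as [a1 a2], b as [b1 b2], c as [c1 c2]. intros Ha Hb Hc H1 H2.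
  apply half_facts in Ha, Hb, Hc. simpl in *. unfold det2 in *; simpl in *.
  assert (I2 : (a1 * c2 - a2 * c1) * b2 = (a1 * b2 - a2 * b1) * c2 + (b1 * c2 - b2 * c1) * a2) by ring.
  destruct (Z.eq_dec b2 0) as [Eb|Eb].
  - subst b2. specialize (proj2 Hb eq_refl). intro. nia.
  - assert (0 < b2) by lia.
    destruct (Z.eq_dec a2 0) as [Ea|Ea]; destruct (Z.eq_dec c2 0) as [Ec|Ec].
    + subst. specialize (proj2 Ha eq_refl). specialize (proj2 Hc eq_refl). intros. nia.
    + nia.
    + nia.
    + nia.
Qed.

Definition ltr (a b : Z*Z) : Prop := 0 < det2 a b.

Lemma det_pos_Dd p q : p <> (0,0) -> q <> (0,0) -> (0 < det2 p q <-> Dd ltr (halfb p) (rep p) (halfb q) (rep q)).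
Proof.
  intros. rewrite det_rep. unfold Dd, ltr, sg. rewrite (det_anti (rep q) (rep p)).
  destruct (halfb p), (halfb q); cbn [Bool.eqb]; lia.
Qed.

Lemma neg_inj p q : negv p = negv q -> p = q.
Proof. destruct p, q; unfold negv; simpl; intro H; inversion H; f_equal; lia. Qed.

Lemma eq_Eqq p q : (p = q <-> Eqq (halfb p) (rep p) (halfb q) (rep q)).
Proof.
  unfold Eqq, rep. split.
  - intros ->. destruct (halfb q); simpl; auto.
  - destruct (halfb p) eqn:Ep, (halfb q) eqn:Eq; simpl; try tauto. apply neg_inj.
Qed.

Lemma ltang_LTt p q : p <> (0,0) -> q <> (0,0) -> (ltangb p q = true <-> LTt ltr (halfb p) (rep p) (halfb q) (rep q)).
Proof.
  intros. unfold ltangb, LTt, ltr. rewrite det_rep. unfold sg.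
  destruct (halfb p), (halfb q); cbn [andb orb negb Bool.eqb]; rewrite ?Z.ltb_lt; try tauto;
  split; intro; try lia; try discriminate; auto.
Qed.

Definition halfu (u x : Z*Z) : Prop := 0 < det2 u x \/ x = u.
Definition ltb (u x y : Z*Z) : Prop := (halfu u x /\ ~ halfu u y) \/ ((halfu u x <-> halfu u y) /\ 0 < det2 x y).
Definition ltp (p q : Z*Z) : Prop := ltangb p q = true.
Definition Wcyc (u x y : Z*Z) : Prop :=
  ((u = x \/ ltp u x) /\ ltp x y) \/ (ltp x y /\ ltp y u) \/ (ltp y u /\ (u = x \/ ltp u x)).

Lemma rep_tri a b : prim a -> prim b -> ltr (rep a) (rep b) \/ rep a = rep b \/ ltr (rep b) (rep a).
Proof.
  intros Ha Hb. unfold ltr. destruct (Z.lt_trichotomy 0 (det2 (rep a) (rep b))) as [h|[h|h]]; auto.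
  - right; left. apply prim_same_half; auto using prim_rep. rewrite !rep_half; auto using prim_nz.
  - right; right. rewrite det_anti. lia.
Qed.

Lemma rebase u x y : prim u -> prim x -> prim y -> x <> y -> ltb u x y -> Wcyc u x y.
Proof.
  intros Hu Hx Hy Hxy H.
  pose proof (prim_nz _ Hu) as Nu. pose proof (prim_nz _ Hx) as Nx. pose proof (prim_nz _ Hy) as Ny.
  assert (Htr : forall a b c, prim a -> prim b -> prim c -> ltr (rep a) (rep b) -> ltr (rep b) (rep c) -> ltr (rep a) (rep c)).
  { intros a b c Ha Hb Hc. unfold ltr. apply half_trans; apply rep_half; apply prim_nz; auto. }
  pose proof (rebase_abs ltr (halfb u) (halfb x) (halfb y) (rep u) (rep x) (rep y)) as R.
  unfold Wcyc, ltp. unfold ltb, halfu in H.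
  rewrite !ltang_LTt by auto. rewrite !(eq_Eqq u x).
  rewrite (det_pos_Dd u x), (det_pos_Dd u y), (det_pos_Dd x y), (eq_Eqq x u), (eq_Eqq y u) in H by auto.
  apply R.
  - intros a. unfold ltr. unfold det2. lia.
  - intros a b. unfold ltr. rewrite (det_anti b a). lia.
  - apply (Htr u x y); auto.
  - apply (Htr u y x); auto.
  - apply (Htr x u y); auto.
  - apply (Htr x y u); auto.
  - apply (Htr y u x); auto.
  - apply (Htr y x u); auto.
  - apply rep_tri; auto.
  - apply rep_tri; auto.
  - apply rep_tri; auto.
  - rewrite <- eq_Eqq. auto.
  - auto.
Qed.

Open Scope Z_scope.

Lemma det_act A p q : inSL2Z A -> det2 (actV A p) (actV A q) = det2 p q.
Proof.
  unfold inSL2Z, M2det, det2, actV. destruct A as [a b c d]; destruct p as [p1 p2], q as [q1 q2]; simpl.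
  intro H. transitivity ((a * d - b * c) * (p1 * q2 - p2 * q1)). ring. rewrite H. ring.
Qed.

Lemma act_inv_l A p : inSL2Z A -> actV (M2inv A) (actV A p) = p.
Proof.
  unfold inSL2Z, M2det, actV, M2inv. destruct A as [a b c d]; destruct p as [p1 p2]; simpl. intro H.
  f_equal.
  - transitivity ((a * d - b * c) * p1). ring. rewrite H; ring.
  - transitivity ((a * d - b * c) * p2). ring. rewrite H; ring.
Qed.

Lemma act_inv_r A p : inSL2Z A -> actV A (actV (M2inv A) p) = p.
Proof.
  unfold inSL2Z, M2det, actV, M2inv. destruct A as [a b c d]; destruct p as [p1 p2]; simpl. intro H.
  f_equal.
  - transitivity ((a * d - b * c) * p1). ring. rewrite H; ring.
  - transitivity ((a * d - b * c) * p2). ring. rewrite H; ring.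
Qed.

Lemma inv_SL A : inSL2Z A -> inSL2Z (M2inv A).
Proof. unfold inSL2Z, M2det, M2inv. destruct A; simpl. intro H. rewrite <- H. ring. Qed.

Lemma act_inj A p q : inSL2Z A -> actV A p = actV A q -> p = q.
Proof. intros H E. rewrite <- (act_inv_l A p H), <- (act_inv_l A q H), E. auto. Qed.

Lemma prim_act A p : inSL2Z A -> prim p -> prim (actV A p).
Proof.
  intros H [x [y Hp]]. unfold inSL2Z, M2det in H. destruct A as [a b c d]; destruct p as [p1 p2]. simpl in *.
  exists (x * d - y * c), (- x * b + y * a). unfold actV; simpl.
  transitivity ((a * d - b * c) * (x * p1 + y * p2)). ring. rewrite H, Hp. ring.
Qed.

Definition e1 : Z*Z := (1, 0).
Lemma prim_e1 : prim e1.
Proof. exists 1, 0. simpl. ring. Qed.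

Lemma halfu_inv A u x : inSL2Z A -> (halfu (actV A u) (actV A x) <-> halfu u x).
Proof.
  intro H. unfold halfu. rewrite det_act by auto. split; intros [h|h]; auto.
  right. eapply act_inj; eauto. right. subst. auto.
Qed.

Lemma ltb_inv A u x y : inSL2Z A -> ltb u x y -> ltb (actV A u) (actV A x) (actV A y).
Proof.
  intros H. unfold ltb. rewrite !halfu_inv by auto. rewrite det_act by auto. auto.
Qed.

Lemma halfu_e1 x : prim x -> (halfu e1 x <-> halfb x = true).
Proof.
  intros [a [b Hx]]. destruct x as [x1 x2]. unfold halfu, halfb, det2, e1; cbn [fst snd] in *.
  rewrite orb_true_iff, andb_true_iff, Z.ltb_lt, Z.eqb_eq, Z.ltb_lt. split.
  - intros [h|h]. left; lia. inversion h; subst. right; split; lia.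
  - intros [h|[h1 h2]]. left; lia. subst x2. right.
    assert (a * x1 = 1) by lia. apply Z.eq_mul_1 in H || (rewrite Z.mul_comm in H; apply Z.eq_mul_1 in H).
    f_equal. lia.
Qed.

Lemma ltang_ltb p q : prim p -> prim q -> ltangb p q = true -> ltb e1 p q.
Proof.
  intros Hp Hq H. unfold ltb. rewrite !halfu_e1 by auto. unfold ltangb in H.
  destruct (halfb p) eqn:Ep, (halfb q) eqn:Eq; simpl in H; try discriminate.
  all: first [ left; split; [reflexivity | discriminate] | right; split; [tauto | apply Z.ltb_lt; auto] ].
Qed.

Lemma ltp_irr p : ~ ltp p p.
Proof.
  unfold ltp, ltangb. replace (det2 p p) with 0 by (unfold det2; ring).
  destruct (halfb p); simpl; discriminate.
Qed.

Lemma ltp_trans a b c : prim a -> prim b -> prim c -> ltp a b -> ltp b c -> ltp a c.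
Proof.
  intros Ha Hb Hc. unfold ltp. rewrite !ltang_LTt by (apply prim_nz; auto).
  assert (Htr : forall a b c, prim a -> prim b -> prim c -> ltr (rep a) (rep b) -> ltr (rep b) (rep c) -> ltr (rep a) (rep c)).
  { intros x y z Hx Hy Hz. unfold ltr. apply half_trans; apply rep_half; apply prim_nz; auto. }
  unfold LTt. destruct (halfb a), (halfb b), (halfb c); try tauto; eauto.
Qed.

Lemma ltp_asym a b : prim a -> prim b -> ltp a b -> ltp b a -> False.
Proof. intros Ha Hb h1 h2. apply (ltp_irr a). eapply ltp_trans; eauto. Qed.

Lemma ltp_tot a b : prim a -> prim b -> ltp a b \/ a = b \/ ltp b a.
Proof.
  intros Ha Hb. unfold ltp. rewrite !ltang_LTt by (apply prim_nz; auto). rewrite (eq_Eqq a b).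
  unfold LTt, Eqq. destruct (rep_tri a b Ha Hb) as [h|[h|h]];
  destruct (halfb a), (halfb b); simpl; auto.
Qed.

Definition jj (A : M2) (p : Z*Z) : Z := if ltangb (actV A p) (actV A e1) then 1 else 0.

Lemma lift_ord A p q : inSL2Z A -> prim p -> prim q -> ltp p q ->
  jj A p < jj A q \/ (jj A p = jj A q /\ ltp (actV A p) (actV A q)).
Proof.
  intros HA Hp Hq H.
  assert (W : Wcyc (actV A e1) (actV A p) (actV A q)).
  { apply rebase; try apply prim_act; auto using prim_e1.
    intro E. apply act_inj in E; auto. subst. eapply ltp_irr; eauto.
    apply ltb_inv; auto. apply ltang_ltb; auto. }
  pose proof (prim_act A e1 HA prim_e1) as Pu. pose proof (prim_act A p HA Hp) as Px. pose proof (prim_act A q HA Hq) as Py.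
  set (u := actV A e1) in *. set (x := actV A p) in *. set (y := actV A q) in *.
  unfold jj. fold u x y. unfold Wcyc in W.
  assert (I1 : forall a, ~ ltp a a) by apply ltp_irr.
  destruct (ltangb x u) eqn:Ex, (ltangb y u) eqn:Ey.
  - right. split; auto. destruct W as [[[E|E] W]|[[W _]|[W [E|E]]]]; auto.
    + exfalso. rewrite E in Ex. apply (I1 x); auto.
    + exfalso. apply (ltp_asym u x); auto.
  - exfalso. destruct W as [[[E|E] W]|[[W W']|[W [E|E]]]].
    + rewrite E in Ex. apply (I1 x). auto.
    + apply (ltp_asym u x); auto.
    + unfold ltp in W'. congruence.
    + unfold ltp in W. congruence.
    + unfold ltp in W. congruence.
  - left. lia.
  - right. split; auto. destruct W as [[[E|E] W]|[[W _]|[W [E|E]]]]; auto;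
    unfold ltp in W; congruence.
Qed.

Open Scope Z_scope.

Definition Yc := {pc : (Z*Z)*Z | prim (fst pc)}.
Definition yp (y : Yc) : Z*Z := fst (proj1_sig y).
Definition yc (y : Yc) : Z := snd (proj1_sig y).
Definition mkY (p : Z*Z) (c : Z) (H : prim p) : Yc := exist (fun pc => prim (fst pc)) (p, c) H.

Lemma yprim y : prim (yp y).
Proof. destruct y; auto. Qed.

Lemma Y_eq y1 y2 : yp y1 = yp y2 -> yc y1 = yc y2 -> y1 = y2.
Proof.
  destruct y1 as [[p1 c1] H1], y2 as [[p2 c2] H2]. unfold yp, yc; simpl. intros -> ->.
  f_equal. apply proof_irrelevance.
Qed.

Definition zn (z : Z) : nat := if (0 <=? z) then Z.to_nat (2*z) else Z.to_nat (-2*z - 1).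
Lemma zn_inj a b : zn a = zn b -> a = b.
Proof. unfold zn. intro E. destruct (Z.leb_spec 0 a), (Z.leb_spec 0 b); lia. Qed.

Definition ycd (y : Yc) : nat := Cantor.to_nat (zn (fst (yp y)), Cantor.to_nat (zn (snd (yp y)), zn (yc y))).

Lemma to_nat_inj p q : Cantor.to_nat p = Cantor.to_nat q -> p = q.
Proof. intro H. rewrite <- (Cantor.cancel_of_to p), <- (Cantor.cancel_of_to q), H. auto. Qed.

Lemma ycd_inj y1 y2 : ycd y1 = ycd y2 -> y1 = y2.
Proof.
  unfold ycd. intro H. apply to_nat_inj in H.
  assert (H1 : zn (fst (yp y1)) = zn (fst (yp y2))) by (apply (f_equal fst) in H; auto).
  assert (H2 : Cantor.to_nat (zn (snd (yp y1)), zn (yc y1)) = Cantor.to_nat (zn (snd (yp y2)), zn (yc y2))) by (apply (f_equal snd) in H; auto).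
  apply to_nat_inj in H2.
  assert (H3 : zn (snd (yp y1)) = zn (snd (yp y2))) by (apply (f_equal fst) in H2; auto).
  assert (H4 : zn (yc y1) = zn (yc y2)) by (apply (f_equal snd) in H2; auto).
  apply zn_inj in H1, H3, H4.
  apply Y_eq; auto. destruct (yp y1), (yp y2); simpl in *; subst; auto.
Qed.

Definition ylt' (y1 y2 : Yc) : Prop := ltp (yp y1) (yp y2) \/ (yp y1 = yp y2 /\ yc y1 < yc y2).

Lemma ylt'_irr y : ~ ylt' y y.
Proof. intros [h|[_ h]]. eapply ltp_irr; eauto. lia. Qed.
Lemma ylt'_trans x y z : ylt' x y -> ylt' y z -> ylt' x z.
Proof.
  unfold ylt'. intros [h|[e h]] [h'|[e' h']].
  - left. eapply ltp_trans; eauto using yprim.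
  - left. rewrite <- e'. auto.
  - left. rewrite e. auto.
  - right. split. congruence. lia.
Qed.
Lemma ylt'_tot x y : ylt' x y \/ x = y \/ ylt' y x.
Proof.
  unfold ylt'. destruct (ltp_tot (yp x) (yp y) (yprim x) (yprim y)) as [h|[h|h]]; auto.
  destruct (Z.lt_trichotomy (yc x) (yc y)) as [h'|[h'|h']]; auto.
  right; left. apply Y_eq; auto.
Qed.

Definition ypt0 : Yc := mkY e1 0 prim_e1.

Definition YS : OS := mkOS Yc ylt' ycd ycd_inj ylt'_irr ylt'_trans ylt'_tot ypt0.

Definition sf (A : M2) (v : Z*Z) (HA : inSL2Z A) (y : Yc) : Yc :=
  mkY (actV A (yp y)) (yc y + det2 (actV A (yp y)) v) (prim_act A _ HA (yprim y)).
Definition si (A : M2) (v : Z*Z) (HA : inSL2Z A) (y : Yc) : Yc :=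
  mkY (actV (M2inv A) (yp y)) (yc y - det2 (yp y) v) (prim_act (M2inv A) _ (inv_SL A HA) (yprim y)).

Lemma sf_si A v HA y : sf A v HA (si A v HA y) = y.
Proof.
  apply Y_eq; unfold sf, si, mkY, yp, yc; simpl; fold (yp y) (yc y).
  apply act_inv_r; auto. rewrite act_inv_r; auto. ring.
Qed.
Lemma si_sf A v HA y : si A v HA (sf A v HA y) = y.
Proof.
  apply Y_eq; unfold sf, si, mkY, yp, yc; simpl; fold (yp y) (yc y).
  apply act_inv_l; auto. ring.
Qed.

Lemma lift_aord A v HA k1 y1 k2 y2 : ltL YS k1 y1 k2 y2 ->
  ltL YS (k1 + jj A (yp y1)) (sf A v HA y1) (k2 + jj A (yp y2)) (sf A v HA y2).
Proof.
  unfold ltL. simpl. unfold ylt'. unfold sf, mkY, yp, yc; simpl. fold (yp y1) (yp y2) (yc y1) (yc y2).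
  assert (J : forall p, jj A p = 0 \/ jj A p = 1). { intro p. unfold jj. destruct ltangb; auto. }
  intros [h|[e h]].
  - destruct (Z.lt_total (k1 + jj A (yp y1)) (k2 + jj A (yp y2))) as [h'|[h'|h']].
    + left; auto.
    + right. split; auto. left.
      assert (jj A (yp y1) = 1 /\ jj A (yp y2) = 0) as [j1 j2] by (destruct (J (yp y1)), (J (yp y2)); lia).
      unfold jj in j1, j2. destruct (ltangb (actV A (yp y1)) (actV A e1)) eqn:E1; try discriminate.
      destruct (ltangb (actV A (yp y2)) (actV A e1)) eqn:E2; try discriminate.
      pose proof (prim_act A _ HA (yprim y1)). pose proof (prim_act A _ HA (yprim y2)). pose proof (prim_act A _ HA prim_e1).
      destruct (ltp_tot (actV A e1) (actV A (yp y2))) as [t|[t|t]]; auto.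
      * eapply ltp_trans; eauto.
      * rewrite <- t. auto.
      * unfold ltp in t. congruence.
    + exfalso. destruct (J (yp y1)), (J (yp y2)); lia.
  - subst k2. destruct h as [h|[e h]].
    + destruct (lift_ord A (yp y1) (yp y2) HA (yprim y1) (yprim y2) h) as [h'|[h' h'']].
      left; lia. right. split. lia. left. auto.
    + rewrite e. right. split; auto. right. split; auto. lia.
Qed.

Definition liftAV (A : M2) (v : Z*Z) (HA : inSL2Z A) : Aut YS :=
  mkAut YS (fun y => jj A (yp y)) (sf A v HA) (si A v HA) (sf_si A v HA) (si_sf A v HA) (lift_aord A v HA).

Lemma liftAV_asf A v HA y : yp (asf (liftAV A v HA) y) = actV A (yp y) /\ yc (asf (liftAV A v HA) y) = yc y + det2 (actV A (yp y)) v.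
Proof. simpl. unfold sf, mkY, yp, yc; simpl. auto. Qed.

Open Scope R_scope.

Lemma det_mul A B : inSL2Z A -> inSL2Z B -> inSL2Z (M2mul A B).
Proof.
  unfold inSL2Z, M2det, M2mul. destruct A as [a b c d], B as [e f g h]; simpl. intros H1 H2.
  transitivity ((a * d - b * c) * (e * h - f * g))%Z. ring. rewrite H1, H2. ring.
Qed.

Lemma act_mul A B p : actV (M2mul A B) p = actV A (actV B p).
Proof. destruct A, B, p; unfold actV, M2mul; simpl; f_equal; ring. Qed.

Lemma det2_add p v w : det2 p (Vadd v w) = (det2 p v + det2 p w)%Z.
Proof. unfold det2, Vadd; simpl; ring. Qed.

Definition sig1 (g : M2 * (Z*Z)) : Aut YS :=
  match excluded_middle_informative (inSL2Z (fst g)) with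
  | left H => liftAV (fst g) (snd g) H
  | right _ => aut_id YS end.

Lemma sig1_asf g (H : inSL2Z (fst g)) y : yp (asf (sig1 g) y) = actV (fst g) (yp y) /\ yc (asf (sig1 g) y) = (yc y + det2 (actV (fst g) (yp y)) (snd g))%Z.
Proof.
  unfold sig1. destruct excluded_middle_informative; [|contradiction]. apply liftAV_asf.
Qed.

Definition phi1 (g : M2 * (Z*Z)) (x : R) : R := psi YS (sig1 g) (x * MM YS) / MM YS.

Lemma phi1_incr g x y : x < y -> phi1 g x < phi1 g y.
Proof.
  intro H. unfold phi1. pose proof (MM_pos YS). unfold Rdiv. apply Rmult_lt_compat_r.
  apply Rinv_0_lt_compat; auto. apply psi_incr. nra.
Qed.

Lemma phi1_surj g z : exists x, phi1 g x = z.
Proof.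
  pose proof (MM_pos YS). exists (psi YS (aut_inv YS (sig1 g)) (z * MM YS) / MM YS).
  unfold phi1. replace (psi YS (aut_inv YS (sig1 g)) (z * MM YS) / MM YS * MM YS) with (psi YS (aut_inv YS (sig1 g)) (z * MM YS)) by (field; lra).
  rewrite psi_inv. field. lra.
Qed.

Lemma phi1_circle g : circle_lift (phi1 g).
Proof.
  split; [|split].
  - apply mono_surj_cont. apply phi1_incr. apply phi1_surj.
  - apply phi1_incr.
  - intro x. unfold phi1. pose proof (MM_pos YS).
    replace ((x + 1) * MM YS) with (x * MM YS + IZR 1 * MM YS) by (simpl; ring).
    rewrite psi_shift. simpl. field. lra.
Qed.

Lemma comp_asf g h : inSL2Z (fst g) -> inSL2Z (fst h) ->
  forall y, asf (sig1 (sdmul g h)) y = asf (aut_comp YS (sig1 g) (sig1 h)) y.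
Proof.
  intros Hg Hh y. assert (Hgh : inSL2Z (fst (sdmul g h))) by (apply det_mul; auto).
  destruct (sig1_asf _ Hgh y) as [E1 E2]. simpl.
  destruct (sig1_asf _ Hh y) as [F1 F2]. destruct (sig1_asf _ Hg (asf (sig1 h) y)) as [G1 G2].
  apply Y_eq.
  - rewrite E1, G1, F1. unfold sdmul. simpl. apply act_mul.
  - rewrite E2, G2, F1, F2. destruct g as [A v], h as [B w]. unfold sdmul. simpl in *.
    rewrite act_mul, det2_add. rewrite det_act by auto. lia.
Qed.

Lemma e2prim : prim (0%Z, 1%Z).
Proof. exists 0%Z, 1%Z. simpl. ring. Qed.

Lemma M2_ext A B : actV A e1 = actV B e1 -> actV A (0%Z,1%Z) = actV B (0%Z,1%Z) -> A = B.
Proof.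
  destruct A, B; unfold actV, e1; simpl. intros H1 H2. inversion H1. inversion H2.
  f_equal; lia.
Qed.

Lemma sig1_faith g h : inSL2Z (fst g) -> inSL2Z (fst h) ->
  (forall y, asf (sig1 g) y = asf (sig1 h) y) -> g = h.
Proof.
  intros Hg Hh H.
  assert (HA : forall p (Hp : prim p), actV (fst g) p = actV (fst h) p /\ det2 (actV (fst g) p) (snd g) = det2 (actV (fst h) p) (snd h)).
  { intros p Hp. set (y := mkY p 0 Hp). specialize (H y).
    destruct (sig1_asf g Hg y) as [E1 E2]. destruct (sig1_asf h Hh y) as [F1 F2].
    rewrite H in E1, E2. unfold y, yp, yc in *. simpl in *. split. congruence. rewrite E2 in F2. lia. }
  destruct g as [A v], h as [B w]. simpl in *.
  assert (AB : A = B).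
  { apply M2_ext. apply HA, prim_e1. apply HA, e2prim. }
  subst B. f_equal.
  destruct (HA (actV (M2inv A) e1) (prim_act _ _ (inv_SL A Hg) prim_e1)) as [_ D1].
  destruct (HA (actV (M2inv A) (0%Z,1%Z)) (prim_act _ _ (inv_SL A Hg) e2prim)) as [_ D2].
  rewrite act_inv_r in D1, D2 by auto. destruct v, w. unfold det2, e1 in *; cbn [fst snd] in *. f_equal; lia.
Qed.

Lemma part1 : exists phi : M2 * (Z * Z) -> (R -> R),
     (forall g, inSL2Z (fst g) -> circle_lift (phi g)) /\
     (forall g h, inSL2Z (fst g) -> inSL2Z (fst h) ->
        same_circle_map (phi (sdmul g h)) (fun x => phi g (phi h x))) /\
     (forall g h, inSL2Z (fst g) -> inSL2Z (fst h) ->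
        same_circle_map (phi g) (phi h) -> g = h).
Proof.
  exists phi1. pose proof (MM_pos YS) as HM. split; [|split].
  - intros; apply phi1_circle.
  - intros g h Hg Hh. destruct (psi_diff YS _ _ (comp_asf g h Hg Hh)) as [e He].
    exists e. intro x. unfold phi1.
    replace (psi YS (sig1 h) (x * MM YS) / MM YS * MM YS) with (psi YS (sig1 h) (x * MM YS)) by (field; lra).
    rewrite He, psi_comp. field. lra.
  - intros g h Hg Hh [k Hk]. apply sig1_faith; auto.
    assert (E : forall t, psi YS (sig1 g) t = psi YS (aut_comp YS (aut_shift YS k) (sig1 h)) t).
    { intro t. rewrite psi_comp, psi_shiftA. specialize (Hk (t / MM YS)). unfold phi1 in Hk.
      replace (t / MM YS * MM YS) with t in Hk by (field; lra).
      apply (Rmult_eq_compat_r (MM YS)) in Hk. unfold Rdiv in Hk.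
      rewrite Rmult_plus_distr_r, !Rmult_assoc, Rinv_l, !Rmult_1_r in Hk by lra. auto. }
    intro y. destruct (psi_faith YS _ _ E y) as [E1 _]. rewrite E1. simpl. auto.
Qed.

Open Scope Z_scope.

Lemma M2mul_assoc A B C : M2mul A (M2mul B C) = M2mul (M2mul A B) C.
Proof. destruct A, B, C; unfold M2mul; cbn -[Z.mul Z.add Z.sub Z.opp]; f_equal; ring. Qed.
Lemma M2mul_1l A : M2mul M2one A = A.
Proof. destruct A; unfold M2mul, M2one; cbn -[Z.mul Z.add Z.sub Z.opp]; f_equal; ring. Qed.
Lemma M2mul_1r A : M2mul A M2one = A.
Proof. destruct A; unfold M2mul, M2one; cbn -[Z.mul Z.add Z.sub Z.opp]; f_equal; ring. Qed.
Lemma M2inv_l A : inSL2Z A -> M2mul (M2inv A) A = M2one.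
Proof. destruct A; unfold inSL2Z, M2det, M2mul, M2inv, M2one; cbn -[Z.mul Z.add Z.sub Z.opp]. intro H. f_equal; lia. Qed.
Lemma M2inv_r A : inSL2Z A -> M2mul A (M2inv A) = M2one.
Proof. destruct A; unfold inSL2Z, M2det, M2mul, M2inv, M2one; cbn -[Z.mul Z.add Z.sub Z.opp]. intro H. f_equal; lia. Qed.

Definition aeq S (s t : Aut S) := forall y, asf s y = asf t y /\ adl s y = adl t y.

Lemma aeq_refl S s : aeq S s s.
Proof. intro; auto. Qed.
Lemma aeq_sym S s t : aeq S s t -> aeq S t s.
Proof. intros H y; destruct (H y); auto. Qed.
Lemma aeq_trans S s t u : aeq S s t -> aeq S t u -> aeq S s u.
Proof. intros H1 H2 y; destruct (H1 y), (H2 y); split; congruence. Qed.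
Lemma aeq_comp S s s' t t' : aeq S s s' -> aeq S t t' -> aeq S (aut_comp S s t) (aut_comp S s' t').
Proof.
  intros H1 H2 y. simpl. destruct (H2 y) as [e1 e2]. rewrite e1. destruct (H1 (asf t' y)) as [f1 f2].
  split; congruence.
Qed.
Lemma aeq_assoc S s t u : aeq S (aut_comp S s (aut_comp S t u)) (aut_comp S (aut_comp S s t) u).
Proof. intro y. simpl. split; auto. lia. Qed.
Lemma aeq_id_l S s : aeq S (aut_comp S (aut_id S) s) s.
Proof. intro y. simpl. split; auto. lia. Qed.
Lemma aeq_id_r S s : aeq S (aut_comp S s (aut_id S)) s.
Proof. intro y. simpl. split; auto. Qed.
Lemma aeq_inv_r S s : aeq S (aut_comp S s (aut_inv S s)) (aut_id S).
Proof. intro y. simpl. rewrite a_s_si. split; auto. lia. Qed.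
Lemma aeq_inv_l S s : aeq S (aut_comp S (aut_inv S s) s) (aut_id S).
Proof. intro y. simpl. rewrite a_si_s. split; auto. lia. Qed.

Lemma psi_aeq S s t : aeq S s t -> forall x, psi S s x = psi S t x.
Proof.
  intro H. apply psi_ext. intro y. assert (E : forall y, asf s y = asf t y) by (intro; apply H).
  pose proof (asi_det S s t E y) as E'. split; auto. rewrite E'. apply H.
Qed.

Definition flip (l : letter) : letter := (fst l, negb (snd l)).
Definition winv (w : list letter) : list letter := rev (map flip w).
Definition cancelb (l l' : letter) : bool := Bool.eqb (fst l) (fst l') && negb (Bool.eqb (snd l) (snd l')).

Fixpoint red (w : list letter) : list letter :=
  match w with
  | nil => nil
  | l :: w' => match red w' with
              | l' :: r => if cancelb l l' then r else l :: l' :: r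
              | nil => [l]
              end
  end.

Lemma reduced_tail l w : reduced (l :: w) -> reduced w.
Proof. destruct w; simpl; tauto. Qed.

Lemma red_reduced w : reduced (red w).
Proof.
  induction w as [|l w IH]; simpl; auto.
  destruct (red w) as [|l' r] eqn:E; simpl; auto.
  destruct (cancelb l l') eqn:C.
  - eapply reduced_tail; eauto.
  - split; auto. intros [h1 h2]. unfold cancelb in C. rewrite h1, Bool.eqb_reflx in C. simpl in C.
    destruct (snd l), (snd l'); simpl in C; try discriminate; apply h2; auto.
Qed.

Lemma cancel_flip l l' : cancelb l l' = true -> l' = flip l.
Proof.
  destruct l as [a b], l' as [c d]. unfold cancelb, flip; simpl.
  destruct a, b, c, d; simpl; intro H; try discriminate; auto.
Qed.

Lemma eval_letter_SL a b l : inSL2Z a -> inSL2Z b -> inSL2Z (eval_letter a b l).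
Proof. intros Ha Hb. unfold eval_letter. destruct (fst l), (snd l); auto using inv_SL. Qed.

Lemma letter_cancel a b l : inSL2Z a -> inSL2Z b ->
  M2mul (eval_letter a b (flip l)) (eval_letter a b l) = M2one /\ M2mul (eval_letter a b l) (eval_letter a b (flip l)) = M2one.
Proof.
  intros Ha Hb. unfold eval_letter, flip. destruct l as [x s]; simpl.
  destruct x, s; simpl; split; auto using M2inv_l, M2inv_r.
Qed.

Lemma eval_app a b u v : eval_word a b (u ++ v) = M2mul (eval_word a b u) (eval_word a b v).
Proof.
  induction u as [|l u IH]; simpl. rewrite M2mul_1l; auto. rewrite IH, M2mul_assoc. auto.
Qed.

Lemma red_eval a b w : inSL2Z a -> inSL2Z b -> eval_word a b (red w) = eval_word a b w.
Proof.
  intros Ha Hb. induction w as [|l w IH]; simpl; auto.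
  destruct (red w) as [|l' r] eqn:E; simpl in *.
  - rewrite <- IH. auto.
  - destruct (cancelb l l') eqn:C.
    + apply cancel_flip in C. subst l'. rewrite <- IH. simpl. rewrite M2mul_assoc.
      destruct (letter_cancel a b l Ha Hb) as [_ ->]. rewrite M2mul_1l. auto.
    + simpl. rewrite <- IH. auto.
Qed.

Lemma winv_cons l w : winv (l :: w) = winv w ++ [flip l].
Proof. unfold winv. simpl. auto. Qed.

Lemma eval_winv a b w : inSL2Z a -> inSL2Z b -> M2mul (eval_word a b w) (eval_word a b (winv w)) = M2one.
Proof.
  intros Ha Hb. induction w as [|l w IH]; simpl. unfold winv; simpl. apply M2mul_1l.
  rewrite winv_cons, eval_app. simpl. rewrite M2mul_1r.
  rewrite <- M2mul_assoc. rewrite (M2mul_assoc (eval_word a b w)). rewrite IH, M2mul_1l.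
  apply letter_cancel; auto.
Qed.

Definition LL S (Xa Xb : Aut S) (l : letter) : Aut S :=
  let x := if fst l then Xb else Xa in if snd l then aut_inv S x else x.

Fixpoint PhiW S (Xa Xb : Aut S) (w : list letter) : Aut S :=
  match w with nil => aut_id S | l :: w' => aut_comp S (LL S Xa Xb l) (PhiW S Xa Xb w') end.

Lemma PhiW_app S Xa Xb u v : aeq S (PhiW S Xa Xb (u ++ v)) (aut_comp S (PhiW S Xa Xb u) (PhiW S Xa Xb v)).
Proof.
  induction u as [|l u IH]; simpl.
  - apply aeq_sym, aeq_id_l.
  - eapply aeq_trans. apply aeq_comp. apply aeq_refl. apply IH. apply aeq_assoc.
Qed.

Lemma LL_cancel S Xa Xb l : aeq S (aut_comp S (LL S Xa Xb (flip l)) (LL S Xa Xb l)) (aut_id S) /\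
  aeq S (aut_comp S (LL S Xa Xb l) (LL S Xa Xb (flip l))) (aut_id S).
Proof.
  unfold LL, flip. destruct l as [x s]; simpl. destruct s; simpl; split;
  first [apply aeq_inv_l | apply aeq_inv_r].
Qed.

Lemma red_PhiW S Xa Xb w : aeq S (PhiW S Xa Xb (red w)) (PhiW S Xa Xb w).
Proof.
  induction w as [|l w IH]; simpl. apply aeq_refl.
  destruct (red w) as [|l' r] eqn:E; simpl in *.
  - apply aeq_comp. apply aeq_refl. auto.
  - destruct (cancelb l l') eqn:C.
    + apply cancel_flip in C. subst l'.
      eapply aeq_trans; [|apply aeq_comp; [apply aeq_refl|apply IH]].
      eapply aeq_trans; [|apply aeq_sym, aeq_assoc].
      eapply aeq_trans; [apply aeq_sym, aeq_id_l|]. apply aeq_comp; [|apply aeq_refl].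
      apply aeq_sym. apply (proj2 (LL_cancel S Xa Xb l)).
    + simpl. apply aeq_comp. apply aeq_refl. auto.
Qed.

Lemma PhiW_winv S Xa Xb w : aeq S (aut_comp S (PhiW S Xa Xb (winv w)) (PhiW S Xa Xb w)) (aut_id S).
Proof.
  induction w as [|l w IH]; simpl.
  - unfold winv; simpl. apply aeq_id_l.
  - rewrite winv_cons. eapply aeq_trans. apply aeq_comp. apply PhiW_app. apply aeq_refl.
    simpl.
    eapply aeq_trans. apply aeq_sym, aeq_assoc.
    eapply aeq_trans. apply aeq_comp. apply aeq_refl. apply aeq_assoc.
    eapply aeq_trans. apply aeq_comp. apply aeq_refl. apply aeq_comp. apply aeq_comp. apply aeq_id_r. apply aeq_refl. apply aeq_refl.
    eapply aeq_trans. apply aeq_comp. apply aeq_refl. apply aeq_comp. apply (proj1 (LL_cancel S Xa Xb l)). apply aeq_refl.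
    eapply aeq_trans. apply aeq_comp. apply aeq_refl. apply aeq_id_l. auto.
Qed.

Lemma PhiW_welldef S Xa Xb a b w1 w2 : inSL2Z a -> inSL2Z b ->
  (forall w, w <> nil -> reduced w -> eval_word a b w <> M2one) ->
  eval_word a b w1 = eval_word a b w2 -> aeq S (PhiW S Xa Xb w1) (PhiW S Xa Xb w2).
Proof.
  intros Ha Hb Hfree E.
  set (z := w1 ++ winv w2).
  assert (Ez : eval_word a b z = M2one). { unfold z. rewrite eval_app, E. apply eval_winv; auto. }
  assert (Rz : red z = nil).
  { destruct (red z) eqn:R; auto. exfalso. apply (Hfree (red z)). rewrite R; discriminate.
    apply red_reduced. rewrite red_eval; auto. }
  assert (Pz : aeq S (PhiW S Xa Xb z) (aut_id S)).
  { eapply aeq_trans. apply aeq_sym, red_PhiW. rewrite Rz. apply aeq_refl. }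
  eapply aeq_trans. apply aeq_sym, aeq_id_r.
  eapply aeq_trans. apply aeq_comp. apply aeq_refl. apply aeq_sym, (PhiW_winv S Xa Xb w2).
  eapply aeq_trans. apply aeq_assoc.
  eapply aeq_trans. apply aeq_comp. eapply aeq_trans. apply aeq_sym, PhiW_app. fold z. apply Pz. apply aeq_refl.
  apply aeq_id_l.
Qed.

Open Scope R_scope.

Definition hmap (x : R) : R := (1 + x / (1 + Rabs x)) / 2.
Definition hinv (u : R) : R := (2 * u - 1) / (1 - Rabs (2 * u - 1)).

Lemma hmap_range x : 0 < hmap x < 1.
Proof.
  unfold hmap. pose proof (Rabs_pos x).
  assert (Rabs (x / (1 + Rabs x)) < 1).
  { unfold Rdiv. rewrite Rabs_mult, Rabs_inv, (Rabs_pos_eq (1 + Rabs x)) by lra.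
    apply (Rmult_lt_reg_r (1 + Rabs x)). lra. rewrite Rmult_assoc, Rinv_l, Rmult_1_r, Rmult_1_l by lra. lra. }
  apply Rabs_def2 in H0. lra.
Qed.

Lemma frac_incr x y : x < y -> x / (1 + Rabs x) < y / (1 + Rabs y).
Proof.
  intro H. pose proof (Rabs_pos x). pose proof (Rabs_pos y).
  apply (Rmult_lt_reg_r ((1 + Rabs x) * (1 + Rabs y))). nra.
  replace (x / (1 + Rabs x) * ((1 + Rabs x) * (1 + Rabs y))) with (x * (1 + Rabs y)) by (field; lra).
  replace (y / (1 + Rabs y) * ((1 + Rabs x) * (1 + Rabs y))) with (y * (1 + Rabs x)) by (field; lra).
  unfold Rabs. destruct Rcase_abs, Rcase_abs; nra.
Qed.

Lemma hmap_incr x y : x < y -> hmap x < hmap y.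
Proof. intro H. unfold hmap. apply frac_incr in H. lra. Qed.

Lemma hinv_hmap x : hinv (hmap x) = x.
Proof.
  unfold hinv, hmap. pose proof (Rabs_pos x).
  replace (2 * ((1 + x / (1 + Rabs x)) / 2) - 1) with (x / (1 + Rabs x)) by (field; lra).
  destruct (Rle_lt_dec 0 x) as [h|h].
  - rewrite (Rabs_pos_eq x) by lra.
    assert (0 <= x / (1 + x)) by (unfold Rdiv; apply Rmult_le_pos; [lra| left; apply Rinv_0_lt_compat; lra]).
    rewrite (Rabs_pos_eq (x / (1 + x))) by lra.
    replace (1 - x / (1 + x)) with (/ (1 + x)) by (field; lra). field. lra.
  - rewrite (Rabs_left x) by lra.
    assert (x / (1 + - x) < 0).
    { unfold Rdiv. assert (0 < / (1 + - x)) by (apply Rinv_0_lt_compat; lra). nra. }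
    rewrite (Rabs_left (x / (1 + - x))) by lra.
    replace (1 - - (x / (1 + - x))) with (/ (1 + - x)) by (field; lra). field. lra.
Qed.

Lemma hmap_hinv u : 0 < u < 1 -> hmap (hinv u) = u.
Proof.
  intro Hu. unfold hinv, hmap. set (z := 2 * u - 1). assert (Hz : -1 < z < 1) by (unfold z; lra).
  replace u with ((1 + z) / 2) by (unfold z; field). f_equal. f_equal.
  destruct (Rle_lt_dec 0 z) as [h|h].
  - rewrite (Rabs_pos_eq z) by lra.
    assert (0 <= z / (1 - z)) by (unfold Rdiv; apply Rmult_le_pos; [lra| left; apply Rinv_0_lt_compat; lra]).
    rewrite (Rabs_pos_eq (z / (1 - z))) by lra. field. lra.
  - rewrite (Rabs_left z) by lra.
    assert (z / (1 - - z) < 0).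
    { unfold Rdiv. assert (0 < / (1 - - z)) by (apply Rinv_0_lt_compat; lra). nra. }
    rewrite (Rabs_left (z / (1 - - z))) by lra. field. lra.
Qed.

Lemma hmap_inj x y : hmap x = hmap y -> x = y.
Proof. intro H. rewrite <- (hinv_hmap x), <- (hinv_hmap y), H. auto. Qed.

Lemma hinv_incr u v : 0 < u < 1 -> 0 < v < 1 -> u < v -> hinv u < hinv v.
Proof.
  intros Hu Hv H. destruct (Rlt_le_dec (hinv u) (hinv v)) as [h|h]; auto.
  exfalso. destruct h as [h|h]. apply hmap_incr in h. rewrite !hmap_hinv in h; auto. lra.
  apply (f_equal hmap) in h. rewrite !hmap_hinv in h; auto. lra.
Qed.

Open Scope R_scope.

Lemma mono_surj_cont_I (f : R -> R) :
  (forall x, inI x -> inI (f x)) ->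
  (forall y, inI y -> exists x, inI x /\ f x = y) ->
  (forall x y, inI x -> inI y -> x < y -> f x < f y) ->
  (forall x, inI x -> forall eps, eps > 0 -> exists delta, delta > 0 /\
      forall y, inI y -> Rabs (y - x) < delta -> Rabs (f y - f x) < eps).
Proof.
  intros Hr Hs Hm x Hx eps He.
  assert (Hle : forall a b, inI a -> inI b -> f a < f b -> a < b).
  { intros a b Ha Hb H. destruct (Rlt_le_dec a b) as [h|h]; auto. destruct h as [h|h].
    apply (Hm b a) in h; auto. lra. subst. lra. }
  assert (L : exists d1, d1 > 0 /\ forall y, inI y -> x - d1 < y -> f x - eps < f y).
  { destruct (Rlt_le_dec (f x - eps) 0) as [h|h].
    - exists 1. split. lra. intros y Hy _. pose proof (Hr y Hy). unfold inI in *. lra.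
    - destruct (Hs (f x - eps)) as [x1 [Hx1 E1]]. pose proof (Hr x Hx). unfold inI in *. lra.
      assert (x1 < x) by (apply Hle; auto; lra).
      exists (x - x1). split. lra. intros y Hy Hy'.
      rewrite <- E1. apply Hm; auto. lra. }
  assert (U : exists d2, d2 > 0 /\ forall y, inI y -> y < x + d2 -> f y < f x + eps).
  { destruct (Rlt_le_dec 1 (f x + eps)) as [h|h].
    - exists 1. split. lra. intros y Hy _. pose proof (Hr y Hy). unfold inI in *. lra.
    - destruct (Hs (f x + eps)) as [x2 [Hx2 E2]]. pose proof (Hr x Hx). unfold inI in *. lra.
      assert (x < x2) by (apply Hle; auto; lra).
      exists (x2 - x). split. lra. intros y Hy Hy'.
      rewrite <- E2. apply Hm; auto. lra. }
  destruct L as [d1 [Hd1 L]]. destruct U as [d2 [Hd2 U]].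
  exists (Rmin d1 d2). split. apply Rmin_pos; lra.
  intros y Hy Hd. apply Rabs_def2 in Hd. destruct Hd as [Hd1' Hd2'].
  assert (Hm1 : Rmin d1 d2 <= d1) by apply Rmin_l. assert (Hm2 : Rmin d1 d2 <= d2) by apply Rmin_r.
  destruct (Rlt_le_dec y x) as [h|h].
  - assert (f y < f x) by (apply Hm; auto). specialize (L y Hy ltac:(lra)). apply Rabs_def1; lra.
  - destruct h as [h|h].
    + assert (f x < f y) by (apply Hm; auto). specialize (U y Hy ltac:(lra)). apply Rabs_def1; lra.
    + subst. rewrite Rminus_eq_0, Rabs_R0. lra.
Qed.

Open Scope Z_scope.

Definition good (s : Aut YS) (A : M2) : Prop :=
  (forall y, yp (asf s y) = actV A (yp y) /\ yc (asf s y) = yc y) /\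
  (forall y y', yp y = yp y' -> adl s y = adl s y').

Lemma good_lift A HA : good (liftAV A (0,0) HA) A.
Proof.
  split.
  - intro y. destruct (liftAV_asf A (0,0) HA y) as [e1 e2]. split; auto. rewrite e2. unfold det2; cbn -[Z.mul Z.add Z.sub]. ring.
  - intros y y' E. simpl. rewrite E. auto.
Qed.

Lemma good_id : good (aut_id YS) M2one.
Proof.
  split. intro y. simpl. split; auto. unfold actV, M2one; cbn -[Z.mul Z.add]. destruct (yp y); cbn -[Z.mul Z.add]. f_equal; ring.
  intros; simpl; auto.
Qed.

Lemma good_comp s t A B : good s A -> good t B -> good (aut_comp YS s t) (M2mul A B).
Proof.
  intros [Hs1 Hs2] [Ht1 Ht2]. split.
  - intro y. simpl. destruct (Ht1 y) as [e1 e2]. destruct (Hs1 (asf t y)) as [f1 f2].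
    rewrite f1, f2, e1, e2, act_mul. auto.
  - intros y y' E. simpl. rewrite (Ht2 y y' E). f_equal. apply Hs2.
    destruct (Ht1 y) as [e1 _]. destruct (Ht1 y') as [e1' _]. congruence.
Qed.

Lemma good_inv s A : inSL2Z A -> good s A -> good (aut_inv YS s) (M2inv A).
Proof.
  intros HA [Hs1 Hs2].
  assert (K : forall y, yp (asi s y) = actV (M2inv A) (yp y) /\ yc (asi s y) = yc y).
  { intro y. destruct (Hs1 (asi s y)) as [e1 e2]. rewrite a_s_si in e1, e2. split; auto.
    rewrite e1, act_inv_l; auto. }
  split.
  - intro y. simpl. apply K.
  - intros y y' E. simpl. f_equal. apply Hs2. destruct (K y) as [e _]. destruct (K y') as [e' _]. congruence.
Qed.

Lemma good_PhiW a b (Ha : inSL2Z a) (Hb : inSL2Z b) w :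
  good (PhiW YS (liftAV a (0,0) Ha) (liftAV b (0,0) Hb) w) (eval_word a b w).
Proof.
  induction w as [|l w IH]; simpl. apply good_id.
  apply good_comp; auto. unfold LL, eval_letter. destruct (fst l), (snd l); simpl;
  auto using good_lift, good_inv.
Qed.

Lemma good_aeq s t A : aeq YS s t -> good s A -> good t A.
Proof.
  intros E [H1 H2]. split.
  - intro y. destruct (E y) as [e _]. rewrite <- e. auto.
  - intros y y' Ey. destruct (E y) as [_ e]. destruct (E y') as [_ e']. rewrite <- e, <- e'. auto.
Qed.

Definition tf (v : Z*Z) (y : Yc) : Yc := mkY (yp y) (yc y + det2 (yp y) v) (yprim y).
Definition ti (v : Z*Z) (y : Yc) : Yc := mkY (yp y) (yc y - det2 (yp y) v) (yprim y).
Lemma tf_ti v y : tf v (ti v y) = y.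
Proof. apply Y_eq; unfold tf, ti, mkY, yp, yc; simpl; fold (yp y) (yc y). auto. ring. Qed.
Lemma ti_tf v y : ti v (tf v y) = y.
Proof. apply Y_eq; unfold tf, ti, mkY, yp, yc; simpl; fold (yp y) (yc y). auto. ring. Qed.
Lemma tf_ord v k1 y1 k2 y2 : ltL YS k1 y1 k2 y2 -> ltL YS (k1 + 0) (tf v y1) (k2 + 0) (tf v y2).
Proof.
  rewrite !Z.add_0_r. unfold ltL; simpl. unfold ylt', tf, mkY, yp, yc; simpl. fold (yp y1) (yp y2) (yc y1) (yc y2).
  intros [h|[e [h|[e' h]]]]; auto. right; split; auto. right. split; auto. rewrite e'. lia.
Qed.
Definition transA (v : Z*Z) : Aut YS := mkAut YS (fun _ => 0) (tf v) (ti v) (tf_ti v) (ti_tf v) (tf_ord v).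

Definition LHw a b (Ha : inSL2Z a) (Hb : inSL2Z b) (A : M2) : Aut YS :=
  match excluded_middle_informative (exists w, A = eval_word a b w) with
  | left E => PhiW YS (liftAV a (0,0) Ha) (liftAV b (0,0) Hb) (proj1_sig (constructive_indefinite_description _ E))
  | right _ => aut_id YS end.

Lemma LHw_spec a b Ha Hb A w : (forall w, w <> nil -> reduced w -> eval_word a b w <> M2one) ->
  A = eval_word a b w -> aeq YS (LHw a b Ha Hb A) (PhiW YS (liftAV a (0,0) Ha) (liftAV b (0,0) Hb) w).
Proof.
  intros Hf E. unfold LHw. destruct excluded_middle_informative as [E'|E']; [|exfalso; eauto].
  destruct constructive_indefinite_description as [w' Hw']. simpl.
  apply PhiW_welldef with (a := a) (b := b); auto. congruence.
Qed.

Definition sig2 a b Ha Hb (g : M2 * (Z*Z)) : Aut YS := aut_comp YS (transA (snd g)) (LHw a b Ha Hb (fst g)).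

Lemma AV_eq A v B w : inSL2Z A ->
  (forall p, prim p -> actV A p = actV B p /\ det2 (actV A p) v = det2 (actV B p) w) -> (A, v) = (B, w).
Proof.
  intros HA H.
  assert (AB : A = B). { apply M2_ext. apply H, prim_e1. apply H, e2prim. }
  subst B. f_equal.
  destruct (H (actV (M2inv A) e1) (prim_act _ _ (inv_SL A HA) prim_e1)) as [_ D1].
  destruct (H (actV (M2inv A) (0%Z,1%Z)) (prim_act _ _ (inv_SL A HA) e2prim)) as [_ D2].
  rewrite act_inv_r in D1, D2 by auto. destruct v, w. unfold det2, e1 in *; cbn [fst snd] in *. f_equal; lia.
Qed.

Lemma LH_good a b Ha Hb A : (forall w, w <> nil -> reduced w -> eval_word a b w <> M2one) ->
  (exists w, A = eval_word a b w) -> good (LHw a b Ha Hb A) A.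
Proof.
  intros Hf [w E]. eapply good_aeq. apply aeq_sym, (LHw_spec a b Ha Hb A w Hf E).
  rewrite E. apply good_PhiW.
Qed.

Lemma LH_mul a b Ha Hb A B : (forall w, w <> nil -> reduced w -> eval_word a b w <> M2one) ->
  (exists w, A = eval_word a b w) -> (exists w, B = eval_word a b w) ->
  aeq YS (LHw a b Ha Hb (M2mul A B)) (aut_comp YS (LHw a b Ha Hb A) (LHw a b Ha Hb B)).
Proof.
  intros Hf [wA EA] [wB EB].
  eapply aeq_trans. apply (LHw_spec a b Ha Hb _ (wA ++ wB) Hf). rewrite eval_app; congruence.
  eapply aeq_trans. apply PhiW_app.
  apply aeq_comp; apply aeq_sym; apply LHw_spec; auto.
Qed.

Lemma sig2_asf a b Ha Hb A v y : (forall w, w <> nil -> reduced w -> eval_word a b w <> M2one) ->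
  (exists w, A = eval_word a b w) ->
  yp (asf (sig2 a b Ha Hb (A, v)) y) = actV A (yp y) /\ yc (asf (sig2 a b Ha Hb (A, v)) y) = yc y + det2 (actV A (yp y)) v.
Proof.
  intros Hf HA. destruct (LH_good a b Ha Hb A Hf HA) as [G1 _]. destruct (G1 y) as [e1 e2].
  unfold sig2. simpl. unfold tf, mkY, yp, yc; simpl. fold (yp (asf (LHw a b Ha Hb A) y)) (yc (asf (LHw a b Ha Hb A) y)).
  rewrite e1, e2. auto.
Qed.

Lemma sig2_hom a b Ha Hb A v B w : (forall w, w <> nil -> reduced w -> eval_word a b w <> M2one) ->
  (exists w, A = eval_word a b w) -> (exists w, B = eval_word a b w) -> inSL2Z A ->
  aeq YS (sig2 a b Ha Hb (sdmul (A,v) (B,w))) (aut_comp YS (sig2 a b Ha Hb (A,v)) (sig2 a b Ha Hb (B,w))).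
Proof.
  intros Hf HA HB HAs. unfold sdmul; simpl.
  assert (HAB : exists w, M2mul A B = eval_word a b w).
  { destruct HA as [wA EA], HB as [wB EB]. exists (wA ++ wB). rewrite eval_app; congruence. }
  intro y. split.
  - change (asf (aut_comp YS (sig2 a b Ha Hb (A, v)) (sig2 a b Ha Hb (B, w))) y) with (asf (sig2 a b Ha Hb (A, v)) (asf (sig2 a b Ha Hb (B, w)) y)).
    apply Y_eq.
    + destruct (sig2_asf a b Ha Hb _ (Vadd v (actV A w)) y Hf HAB) as [e1 _].
      destruct (sig2_asf a b Ha Hb _ w y Hf HB) as [f1 _].
      destruct (sig2_asf a b Ha Hb _ v (asf (sig2 a b Ha Hb (B, w)) y) Hf HA) as [g1 _].
      rewrite e1, g1, f1, act_mul. auto.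
    + destruct (sig2_asf a b Ha Hb _ (Vadd v (actV A w)) y Hf HAB) as [e1 e2].
      destruct (sig2_asf a b Ha Hb _ w y Hf HB) as [f1 f2].
      destruct (sig2_asf a b Ha Hb _ v (asf (sig2 a b Ha Hb (B, w)) y) Hf HA) as [g1 g2].
      rewrite e2, g2, f1, f2, act_mul, det2_add, det_act by auto. ring.
  - unfold sig2. simpl. destruct (LH_mul a b Ha Hb A B Hf HA HB y) as [_ E]. rewrite E. simpl.
    destruct (LH_good a b Ha Hb A Hf HA) as [_ G]. 
    rewrite !Z.add_0_r. f_equal. apply G.
    unfold tf, mkY, yp; simpl. auto.
Qed.

Open Scope R_scope.

Definition psi2 a b Ha Hb (g : M2 * (Z*Z)) (u : R) : R :=
  if Rlt_dec 0 u then if Rlt_dec u 1 then hmap (psi YS (sig2 a b Ha Hb g) (hinv u)) else u else u.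

Lemma psi2_int a b Ha Hb g u : 0 < u < 1 -> psi2 a b Ha Hb g u = hmap (psi YS (sig2 a b Ha Hb g) (hinv u)).
Proof. intro H. unfold psi2. destruct Rlt_dec; [|lra]. destruct Rlt_dec; [|lra]. auto. Qed.
Lemma psi2_0 a b Ha Hb g : psi2 a b Ha Hb g 0 = 0.
Proof. unfold psi2. destruct Rlt_dec; [lra|]. auto. Qed.
Lemma psi2_1 a b Ha Hb g : psi2 a b Ha Hb g 1 = 1.
Proof. unfold psi2. destruct Rlt_dec; [|lra]. destruct Rlt_dec; [lra|]. auto. Qed.

Lemma inI_cases u : inI u -> u = 0 \/ u = 1 \/ 0 < u < 1.
Proof. unfold inI. intro. lra. Qed.

Lemma psi2_homeo a b Ha Hb g : interval_homeo (psi2 a b Ha Hb g).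
Proof.
  set (f := psi2 a b Ha Hb g). set (s := sig2 a b Ha Hb g).
  assert (R1 : forall x, inI x -> inI (f x)).
  { intros x Hx. destruct (inI_cases x Hx) as [->|[->|h]]; unfold f.
    rewrite psi2_0; unfold inI; lra. rewrite psi2_1; unfold inI; lra.
    rewrite psi2_int by auto. fold s. pose proof (hmap_range (psi YS s (hinv x))). unfold inI; lra. }
  assert (R2 : forall y, inI y -> exists x, inI x /\ f x = y).
  { intros y Hy. destruct (inI_cases y Hy) as [->|[->|h]].
    - exists 0. split. unfold inI; lra. apply psi2_0.
    - exists 1. split. unfold inI; lra. apply psi2_1.
    - set (x := hmap (psi YS (aut_inv YS s) (hinv y))). pose proof (hmap_range (psi YS (aut_inv YS s) (hinv y))).
      exists x. split. unfold inI, x; lra. unfold f. rewrite psi2_int by (unfold x; lra).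
      unfold x. rewrite hinv_hmap. fold s. rewrite psi_inv. apply hmap_hinv; auto. }
  assert (R3 : forall x y, inI x -> inI y -> x < y -> f x < f y).
  { intros x y Hx Hy Hxy. unfold f.
    destruct (inI_cases x Hx) as [->|[->|hx]]; destruct (inI_cases y Hy) as [->|[->|hy]]; try lra;
    rewrite ?psi2_0, ?psi2_1, ?psi2_int by auto; try lra;
    try (pose proof (hmap_range (psi YS s (hinv y))); fold s; lra);
    try (pose proof (hmap_range (psi YS s (hinv x))); fold s; lra).
    apply hmap_incr, psi_incr, hinv_incr; auto. }
  split; [auto|split; [auto|split; [auto|]]].
  apply mono_surj_cont_I; auto.
Qed.

Lemma part2 : forall H : M2 -> Prop, is_subgroup H -> finite_index H -> free_rank2 H ->
   exists psi : M2 * (Z * Z) -> (R -> R),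
     (forall g, H (fst g) -> interval_homeo (psi g)) /\
     (forall g h, H (fst g) -> H (fst h) ->
        forall x, inI x -> psi (sdmul g h) x = psi g (psi h x)) /\
     (forall g h, H (fst g) -> H (fst h) ->
        (forall x, inI x -> psi g x = psi h x) -> g = h).
Proof.
  intros H Hsub _ [a [b [Ha' [Hb' [Hgen Hf]]]]].
  assert (Ha : inSL2Z a) by (apply Hsub; auto). assert (Hb : inSL2Z b) by (apply Hsub; auto).
  exists (psi2 a b Ha Hb). split; [|split].
  - intros; apply psi2_homeo.
  - intros [A v] [B w] HA HB x Hx. simpl in HA, HB.
    destruct (inI_cases x Hx) as [->|[->|h]].
    + rewrite !psi2_0. auto.
    + rewrite !psi2_1. auto.
    + assert (HAs : inSL2Z A) by (apply Hsub; auto).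
      rewrite (psi2_int _ _ _ _ (B,w)) by auto.
      pose proof (hmap_range (psi YS (sig2 a b Ha Hb (B, w)) (hinv x))).
      rewrite !psi2_int by auto. rewrite hinv_hmap. f_equal.
      rewrite <- psi_comp. apply psi_aeq. apply sig2_hom; auto.
  - intros [A v] [B w] HA HB E. simpl in HA, HB.
    assert (HAs : inSL2Z A) by (apply Hsub; auto).
    assert (E' : forall t, psi YS (sig2 a b Ha Hb (A, v)) t = psi YS (sig2 a b Ha Hb (B, w)) t).
    { intro t. pose proof (hmap_range t). specialize (E (hmap t) ltac:(unfold inI; lra)).
      rewrite !psi2_int, hinv_hmap in E by auto. apply hmap_inj; auto. }
    apply AV_eq; auto. intros p Hp. set (y := mkY p 0 Hp).
    destruct (psi_faith YS _ _ E' y) as [F _].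
    destruct (sig2_asf a b Ha Hb A v y Hf (Hgen A HA)) as [e1 e2].
    destruct (sig2_asf a b Ha Hb B w y Hf (Hgen B HB)) as [f1 f2].
    rewrite F in e1, e2. unfold y, yp, yc in *; simpl in *. split. congruence. rewrite e2 in f2. lia.
Qed.


Close Scope Z_scope.
Open Scope R_scope.

Theorem mainTheorem7 :
  (* SL(2,Z) ⋉ Z^2 embeds in Homeo+(S^1) *)
  (exists phi : M2 * (Z * Z) -> (R -> R),
     (forall g, inSL2Z (fst g) -> circle_lift (phi g)) /\
     (forall g h, inSL2Z (fst g) -> inSL2Z (fst h) ->
        same_circle_map (phi (sdmul g h)) (fun x => phi g (phi h x))) /\
     (forall g h, inSL2Z (fst g) -> inSL2Z (fst h) ->
        same_circle_map (phi g) (phi h) -> g = h)) /\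
  (* F_2 ⋉ Z^2 embeds in Homeo+([0,1]) for F_2 free of finite index in SL(2,Z) *)
  (forall H : M2 -> Prop, is_subgroup H -> finite_index H -> free_rank2 H ->
   exists psi : M2 * (Z * Z) -> (R -> R),
     (forall g, H (fst g) -> interval_homeo (psi g)) /\
     (forall g h, H (fst g) -> H (fst h) ->
        forall x, inI x -> psi (sdmul g h) x = psi g (psi h x)) /\
     (forall g h, H (fst g) -> H (fst h) ->
        (forall x, inI x -> psi g x = psi h x) -> g = h)).
Proof.
  split. exact part1. exact part2.
Qed.
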